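(* Let $\omega$ be a T-obstacle. Then every cross of $\omega$ is a minimum skeleton for $\omega$.
   Context: An obstacle $\omega$ is a simple polygon in $\mathbb{R}^2$ (a closed, bounded polygonal region without holes whose boundary does not intersect itself), assumed in general position (no three of its vertices are collinear); vertices and edges of $\omega$ are those of its boundary. $\omega$ is rectilinear if each edge is horizontal or vertical, and a rectilinear obstacle is rectilinearly-convex if any two points of $\omega$ can be joined by a shortest rectilinear path (made of horizontal and vertical segments, of minimum $\ell_1$ length) contained in $\omega$. A corner point of a rectilinear path is a point where a horizontal and a vertical segment of the path meet. A set $S$ of closed line segments is inside $\omega$ if the union of its elements is contained in $\omega$. Such an $S$ is a skeleton for $\omega$ if for every pair of points $p,q$ not in the interior of $\omega$ such that every shortest rectilinear path between $p$ and $q$ with at most one corner point meets the interior of $\omega$, each such path intersects some element of $S$; a minimum skeleton is one with the fewest segments. $B(\omega)$ is the smallest closed axis-parallel rectangle containing $\omega$; the extreme edges are the edges of $\omega$ lying on the boundary of $B(\omega)$ (exactly four: left, right, bottom, top); an extreme corner is a vertex of $\omega$ that is a common endpoint of two extreme edges. A T-obstacle is a rectilinearly-convex obstacle with exactly two extreme corners, which are adjacent (lie on a common side of $B(\omega)$). A cross of $\omega$ is a pair $\{s_H,s_V\}$ of line segments contained in $\omega$, where $s_H$ has one endpoint on each of the two horizontal extreme edges and $s_V$ has one endpoint on each of the two vertical extreme edges. *)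

(* Defs.v *)
From HB Require Import structures.
From mathcomp Require Import all_boot all_order all_algebra.
From mathcomp Require Import all_classical all_reals all_analysis.
Set Implicit Arguments. Unset Strict Implicit. Unset Printing Implicit Defensive.
Import Order.TTheory GRing.Theory Num.Theory.
Import numFieldNormedType.Exports.
Local Open Scope ring_scope.
Local Open Scope classical_set_scope.

Section Defs.
Context {R : realType}.
Local Notation pt := (R * R)%type.

Definition seg (a b : pt) : set pt :=
  [set p | exists t : R, 0 <= t <= 1 /\
     p = (a.1 + t * (b.1 - a.1), a.2 + t * (b.2 - a.2))].

(* A polygon is given by its cyclic list of vertices vs. *)
Definition vtx (vs : seq pt) (i : nat) : pt := nth (0, 0) vs i.
Definition nxt (vs : seq pt) (i : nat) : nat := (i.+1 %% size vs)%N.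
Definition edge (vs : seq pt) (i : nat) : set pt := seg (vtx vs i) (vtx vs (nxt vs i)).
Definition bdry (vs : seq pt) : set pt :=
  [set p | exists2 i, (i < size vs)%N & edge vs i p].

Definition collinear (a b c : pt) : bool :=
  (b.1 - a.1) * (c.2 - a.2) - (b.2 - a.2) * (c.1 - a.1) == 0.

Definition general_position (vs : seq pt) : Prop :=
  forall i j k, (i < size vs)%N -> (j < size vs)%N -> (k < size vs)%N ->
    i != j -> j != k -> i != k -> ~~ collinear (vtx vs i) (vtx vs j) (vtx vs k).

Definition simple_polygon (vs : seq pt) : Prop :=
  [/\ (3 <= size vs)%N, general_position vs,
    (forall i, (i < size vs)%N ->
       edge vs i `&` edge vs (nxt vs i) = [set vtx vs (nxt vs i)]) &
    (forall i j, (i < size vs)%N -> (j < size vs)%N -> i != j ->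
       j != nxt vs i -> i != nxt vs j -> edge vs i `&` edge vs j = set0)].

(* p lies in the unbounded (path-)component of the complement of the boundary *)
Definition in_unbounded_component (vs : seq pt) (p : pt) : Prop :=
  forall M : R, exists g : R -> pt,
    [/\ {within `[(0:R), 1]%classic, continuous g}, g 0 = p,
        (forall t : R, 0 <= t <= 1 -> ~ bdry vs (g t)) &
        M < `|(g 1).1| + `|(g 1).2|].

(* the obstacle omega: the closed bounded region enclosed by the boundary *)
Definition region (vs : seq pt) : set pt := [set p | ~ in_unbounded_component vs p].

Definition rectilinear (vs : seq pt) : Prop :=
  forall i, (i < size vs)%N ->
    (vtx vs i).1 = (vtx vs (nxt vs i)).1 \/ (vtx vs i).2 = (vtx vs (nxt vs i)).2.

Definition d1 (p q : pt) : R := `|p.1 - q.1| + `|p.2 - q.2|.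
Definition rpath (ps : seq pt) : Prop :=
  ps != [::] /\ forall i, (i.+1 < size ps)%N ->
    (nth (0,0) ps i).1 = (nth (0,0) ps i.+1).1 \/ (nth (0,0) ps i).2 = (nth (0,0) ps i.+1).2.
Definition pathset (ps : seq pt) : set pt :=
  [set p | (exists2 i, (i < size ps)%N & p = nth (0,0) ps i) \/
           (exists2 i, (i.+1 < size ps)%N & seg (nth (0,0) ps i) (nth (0,0) ps i.+1) p)].
Definition rlength (ps : seq pt) : R :=
  \sum_(i < (size ps).-1) d1 (nth (0,0) ps i) (nth (0,0) ps i.+1).

(* any two points of omega are joined by a rectilinear path inside omega of
   minimum l1 length (= the l1 distance) *)
Definition rect_convex (vs : seq pt) : Prop :=
  forall p q, region vs p -> region vs q -> exists ps : seq pt,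
    [/\ rpath ps, nth (0,0) ps 0 = p, nth (0,0) ps (size ps).-1 = q,
        pathset ps `<=` region vs & rlength ps = d1 p q].

(* the sides of B(omega), the smallest closed axis-parallel rectangle containing omega *)
Definition is_xmin (vs : seq pt) (x : R) : Prop :=
  (forall p, region vs p -> x <= p.1) /\ exists2 p, region vs p & p.1 = x.
Definition is_xmax (vs : seq pt) (x : R) : Prop :=
  (forall p, region vs p -> p.1 <= x) /\ exists2 p, region vs p & p.1 = x.
Definition is_ymin (vs : seq pt) (y : R) : Prop :=
  (forall p, region vs p -> y <= p.2) /\ exists2 p, region vs p & p.2 = y.
Definition is_ymax (vs : seq pt) (y : R) : Prop :=
  (forall p, region vs p -> p.2 <= y) /\ exists2 p, region vs p & p.2 = y.

Definition on_left (vs : seq pt) (p : pt) : Prop := exists2 x, is_xmin vs x & p.1 = x.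
Definition on_right (vs : seq pt) (p : pt) : Prop := exists2 x, is_xmax vs x & p.1 = x.
Definition on_bottom (vs : seq pt) (p : pt) : Prop := exists2 y, is_ymin vs y & p.2 = y.
Definition on_top (vs : seq pt) (p : pt) : Prop := exists2 y, is_ymax vs y & p.2 = y.

Definition left_edge (vs : seq pt) i : Prop :=
  [/\ (i < size vs)%N, on_left vs (vtx vs i) & on_left vs (vtx vs (nxt vs i))].
Definition right_edge (vs : seq pt) i : Prop :=
  [/\ (i < size vs)%N, on_right vs (vtx vs i) & on_right vs (vtx vs (nxt vs i))].
Definition bottom_edge (vs : seq pt) i : Prop :=
  [/\ (i < size vs)%N, on_bottom vs (vtx vs i) & on_bottom vs (vtx vs (nxt vs i))].
Definition top_edge (vs : seq pt) i : Prop :=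
  [/\ (i < size vs)%N, on_top vs (vtx vs i) & on_top vs (vtx vs (nxt vs i))].
Definition extreme_edge (vs : seq pt) i : Prop :=
  left_edge vs i \/ right_edge vs i \/ bottom_edge vs i \/ top_edge vs i.

Definition endpoint_of_edge (vs : seq pt) (p : pt) j : Prop :=
  p = vtx vs j \/ p = vtx vs (nxt vs j).

Definition extreme_corner (vs : seq pt) i : Prop :=
  (i < size vs)%N /\ exists j k, [/\ j != k, extreme_edge vs j, extreme_edge vs k,
      endpoint_of_edge vs (vtx vs i) j & endpoint_of_edge vs (vtx vs i) k].

Definition T_obstacle (vs : seq pt) : Prop :=
  [/\ rectilinear vs, rect_convex vs &
    exists i1 i2, [/\ i1 != i2, extreme_corner vs i1, extreme_corner vs i2,
      (forall i, extreme_corner vs i -> i = i1 \/ i = i2) &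
      [\/ on_left vs (vtx vs i1) /\ on_left vs (vtx vs i2),
          on_right vs (vtx vs i1) /\ on_right vs (vtx vs i2),
          on_bottom vs (vtx vs i1) /\ on_bottom vs (vtx vs i2) |
          on_top vs (vtx vs i1) /\ on_top vs (vtx vs i2)]]].

Definition segset (s : pt * pt) : set pt := seg s.1 s.2.

Definition cross (vs : seq pt) (sH sV : pt * pt) : Prop :=
  [/\ segset sH `<=` region vs, segset sV `<=` region vs,
    (exists i j, [/\ bottom_edge vs i, top_edge vs j &
        (edge vs i sH.1 /\ edge vs j sH.2) \/ (edge vs i sH.2 /\ edge vs j sH.1)]) &
    (exists i j, [/\ left_edge vs i, right_edge vs j &
        (edge vs i sV.1 /\ edge vs j sV.2) \/ (edge vs i sV.2 /\ edge vs j sV.1)])].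

(* shortest rectilinear paths from p to q with at most one corner point
   (as point sets): the two L-shaped paths *)
Definition Lpath (p q : pt) (P : set pt) : Prop :=
  P = seg p (q.1, p.2) `|` seg (q.1, p.2) q \/ P = seg p (p.1, q.2) `|` seg (p.1, q.2) q.

Definition inside (vs : seq pt) (S : seq (pt * pt)) : Prop :=
  forall s, s \in S -> segset s `<=` region vs.

Definition skeleton (vs : seq pt) (S : seq (pt * pt)) : Prop :=
  inside vs S /\
  forall p q, ~ interior (region vs) p -> ~ interior (region vs) q ->
    (forall P, Lpath p q P -> P `&` interior (region vs) !=set0) ->
    forall P, Lpath p q P -> exists2 s, s \in S & P `&` segset s !=set0.

Definition min_skeleton (vs : seq pt) (S : seq (pt * pt)) : Prop :=
  skeleton vs S /\ forall S', skeleton vs S' -> (size S <= size S')%N.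

End Defs.

(* Main.v *)
From HB Require Import structures.
From mathcomp Require Import all_boot all_order all_algebra.
From mathcomp Require Import all_classical all_reals all_analysis.
From mathcomp Require Import lra ring zify.
Require Import Defs.
Import Order.TTheory GRing.Theory Num.Theory.
Import numFieldNormedType.Exports.
Local Open Scope ring_scope.
Local Open Scope classical_set_scope.

Section Seg.
Context {R : realType}.
Local Notation pt := (R * R)%type.

Lemma param (u w y : R) : (u - y) * (w - y) <= 0 ->
  exists t, 0 <= t <= 1 /\ y = u + t * (w - u).
Proof.
move=> H.
have [E|N] := eqVneq u w.
  subst w; exists 0; split; first by rewrite lexx ler01.
  nra.
have wu : w - u != 0 by rewrite subr_eq0 eq_sym.
have sq : 0 < (w - u) ^+ 2 by rewrite lt_def sqrf_eq0 wu sqr_ge0.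
exists ((y - u) / (w - u)); split; last by rewrite divfK // addrC subrK.
have -> : (y - u) / (w - u) = ((y - u) * (w - u)) / (w - u) ^+ 2.
  by field.
apply/andP; split.
  apply: divr_ge0; last exact: ltW. nra.
rewrite ler_pdivrMr // mul1r. nra.
Qed.

Lemma segP (a b v : pt) : seg a b v <->
  exists t, 0 <= t <= 1 /\ v.1 = a.1 + t * (b.1 - a.1) /\ v.2 = a.2 + t * (b.2 - a.2).
Proof.
split.
- by case=> t [ht ->]; exists t.
- case=> t [ht [h1 h2]]; exists t; split => //; by case: v h1 h2 => ? ? /= -> ->.
Qed.

Lemma seg_prod1 (a b v : pt) : seg a b v -> (v.1 - a.1) * (v.1 - b.1) <= 0.
Proof.
case/segP=> t [/andP[t0 t1] [-> _]].
have -> : (a.1 + t * (b.1 - a.1) - a.1) * (a.1 + t * (b.1 - a.1) - b.1)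
   = (t * (t - 1)) * (b.1 - a.1) ^+ 2 by ring.
apply: mulr_le0_ge0; last exact: sqr_ge0. nra.
Qed.

Lemma seg_prod2 (a b v : pt) : seg a b v -> (v.2 - a.2) * (v.2 - b.2) <= 0.
Proof.
case/segP=> t [/andP[t0 t1] [_ ->]].
have -> : (a.2 + t * (b.2 - a.2) - a.2) * (a.2 + t * (b.2 - a.2) - b.2)
   = (t * (t - 1)) * (b.2 - a.2) ^+ 2 by ring.
apply: mulr_le0_ge0; last exact: sqr_ge0. nra.
Qed.

Lemma seg_hE (a b v : pt) : a.2 = b.2 ->
  seg a b v <-> v.2 = a.2 /\ (v.1 - a.1) * (v.1 - b.1) <= 0.
Proof.
move=> e; split.
- move=> h; split; last exact: seg_prod1 h.
  by case/segP: h => t [_ [_ ->]]; rewrite e subrr mulr0 addr0.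
- case=> h2 h1; have [t [ht e1]] : exists t, 0 <= t <= 1 /\ v.1 = a.1 + t * (b.1 - a.1).
    by apply: param; nra.
  apply/segP; exists t; split => //; split => //. rewrite h2 -e subrr mulr0 addr0 //.
Qed.

Lemma seg_vE (a b v : pt) : a.1 = b.1 ->
  seg a b v <-> v.1 = a.1 /\ (v.2 - a.2) * (v.2 - b.2) <= 0.
Proof.
move=> e; split.
- move=> h; split; last exact: seg_prod2 h.
  by case/segP: h => t [_ [-> _]]; rewrite e subrr mulr0 addr0.
- case=> h1 h2; have [t [ht e2]] : exists t, 0 <= t <= 1 /\ v.2 = a.2 + t * (b.2 - a.2).
    by apply: param; nra.
  apply/segP; exists t; split => //; split => //. rewrite h1 -e subrr mulr0 addr0 //.
Qed.

Lemma seg_sym (a b : pt) : seg a b = seg b a.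
Proof.
apply/seteqP; split => v /segP [t [/andP[t0 t1] [h1 h2]]]; apply/segP; exists (1 - t);
  (split; first by apply/andP; split; lra); split; rewrite ?h1 ?h2; ring.
Qed.

Lemma seg_l (a b : pt) : seg a b a.
Proof. apply/segP; exists 0; split; first by rewrite lexx ler01. by rewrite !mul0r !addr0. Qed.

Lemma seg_r (a b : pt) : seg a b b.
Proof. by rewrite seg_sym; exact: seg_l. Qed.

Lemma seg_sub (a b u w : pt) : seg a b u -> seg a b w -> seg u w `<=` seg a b.
Proof.
move=> /segP [s [/andP[s0 s1] [u1 u2]]] /segP [r [/andP[r0 r1] [w1 w2]]] v
  /segP [t [/andP[t0 t1] [v1 v2]]].
apply/segP; exists (s + t * (r - s)); split.
  apply/andP; split; nra.
split; [rewrite v1 u1 w1 | rewrite v2 u2 w2]; ring.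
Qed.

Lemma seg_ivt2 (u w : pt) (y : R) : (u.2 - y) * (w.2 - y) <= 0 ->
  exists v, seg u w v /\ v.2 = y.
Proof.
move=> /param [t [ht e]]; exists (u.1 + t * (w.1 - u.1), y); split => //.
by apply/segP; exists t; split.
Qed.

Lemma seg_ivt1 (u w : pt) (x : R) : (u.1 - x) * (w.1 - x) <= 0 ->
  exists v, seg u w v /\ v.1 = x.
Proof.
move=> /param [t [ht e]]; exists (x, u.2 + t * (w.2 - u.2)); split => //.
by apply/segP; exists t; split.
Qed.
End Seg.

Section Abs.
Context {R : realType}.
Local Notation pt := (R * R)%type.

Lemma small4 (a b c d : R) : 0 < a -> 0 < b -> 0 < c -> 0 < d ->
  exists2 e : R, 0 < e & [/\ e <= a, e <= b, e <= c & e <= d].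
Proof.
move=> *; exists (Num.min (Num.min a b) (Num.min c d)).
  by rewrite !lt_min; repeat (apply/andP; split).
by rewrite !ge_min !lexx !orbT.
Qed.

Definition intr (O : set pt) (z : pt) := exists2 e : R, 0 < e &
  forall v : pt, `|v.1 - z.1| < e -> `|v.2 - z.2| < e -> O v.
Definition HC (O : set pt) := forall a b x y : R,
  O (a, y) -> O (b, y) -> (x - a) * (x - b) <= 0 -> O (x, y).
Definition VC (O : set pt) := forall a b x y : R,
  O (x, a) -> O (x, b) -> (y - a) * (y - b) <= 0 -> O (x, y).

Lemma interiorP (A : set pt) z : interior A z <-> intr A z.
Proof.
rewrite /interior /= nbhs_ballP /nbhs_ball /=. split.
- case=> e e0 H; exists e => // v h1 h2; apply: H.
  split => /=; rewrite /ball /= distrC //.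
- case=> e e0 H; exists e => // v [h1 h2]. apply: H; rewrite distrC //.
Qed.

Lemma intr_in O z : intr O z -> O z.
Proof. by case=> e e0 H; apply: H; rewrite subrr normr0. Qed.

Lemma intrH O (A B z u K : pt) : HC O -> seg A B `<=` O ->
  (forall v, O v -> (v.2 - A.2) * (v.2 - B.2) <= 0) ->
  intr O z -> u.2 = z.2 -> seg A B K -> K.2 = z.2 ->
  (K.1 - u.1) * (z.1 - u.1) < 0 -> intr O u.
Proof.
move=> hc sO strip [e e0 He] uz sK Kz neg.
have Hy : forall y, `|y - z.2| < e -> (y - A.2) * (y - B.2) <= 0.
  move=> y hy; apply: (strip (z.1, y)); apply: He => //=; by rewrite subrr normr0.
have dY : B.2 - A.2 != 0.
  apply/negP => /eqP d0.
  have h1 : (z.2 + e / 2 - A.2) * (z.2 + e / 2 - B.2) <= 0.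
    apply: Hy; have -> : z.2 + e / 2 - z.2 = e / 2 by ring.
    rewrite ger0_norm; lra.
  have h2 : (z.2 - e / 2 - A.2) * (z.2 - e / 2 - B.2) <= 0.
    apply: Hy; have -> : z.2 - e / 2 - z.2 = - (e / 2) by ring.
    rewrite normrN ger0_norm; lra.
  have eB : B.2 = A.2 by lra.
  rewrite eB in h1 h2.
  have s1 : z.2 + e / 2 - A.2 = 0.
    by apply/eqP; rewrite -sqrf_eq0 eq_le sqr_ge0 andbT expr2.
  have s2 : z.2 - e / 2 - A.2 = 0.
    by apply/eqP; rewrite -sqrf_eq0 eq_le sqr_ge0 andbT expr2.
  lra.
case/segP: sK => t [_ [K1 K2]].
have P : forall y, `|y - z.2| < e -> exists x, O (x, y) /\
    (x - K.1) * (B.2 - A.2) = (y - z.2) * (B.1 - A.1).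
  move=> y /Hy hy.
  have [t' [ht' ey]] : exists t', 0 <= t' <= 1 /\ y = A.2 + t' * (B.2 - A.2).
    by apply: param; nra.
  exists (A.1 + t' * (B.1 - A.1)); split.
    by apply: sO; apply/segP; exists t'; split.
  rewrite K1 ey -Kz K2; ring.
set g := `|K.1 - u.1|; set D := `|z.1 - u.1|.
have g0 : 0 < g by rewrite normr_gt0; apply/negP => /eqP h; move: neg; rewrite h mul0r ltxx.
have D0 : 0 < D by rewrite normr_gt0; apply/negP => /eqP h; move: neg; rewrite h mulr0 ltxx.
have aY : 0 < `|B.2 - A.2| by rewrite normr_gt0.
set e1 := g * `|B.2 - A.2| / (2 * (`|B.1 - A.1| + 1)).
have e10 : 0 < e1 by rewrite /e1 divr_gt0 // ?mulr_gt0 //; lra.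
have e1E : e1 * (2 * (`|B.1 - A.1| + 1)) = g * `|B.2 - A.2|.
  by rewrite /e1 divfK //; lra.
have [ep ep0 [epe epD epg epe1]] := small4 _ _ _ _ e0 D0 (divr_gt0 g0 (ltr0Sn _ 1)) e10.
exists ep => // v h1 h2.
have h2' : `|v.2 - z.2| < e by rewrite -uz; exact: (lt_le_trans h2 epe).
have [x [Ox Hx]] := P _ h2'.
have Oz : O (z.1, v.2) by apply: He; rewrite ?subrr ?normr0.
have hx : `|x - K.1| < g / 2.
  have a1 : `|x - K.1| * `|B.2 - A.2| = `|v.2 - z.2| * `|B.1 - A.1| by rewrite -!normrM Hx.
  have a2 : `|v.2 - z.2| <= e1 by rewrite -uz; apply: ltW; exact: (lt_le_trans h2 epe1).
  have b1 : `|v.2 - z.2| * `|B.1 - A.1| <= e1 * `|B.1 - A.1| by apply: ler_wpM2r.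
  have := normr_ge0 (B.1 - A.1). nra.
have hx' := hx; have h1' := h1.
rewrite ltr_norml in hx'; rewrite ltr_norml in h1'.
case/andP: hx' => hx1 hx2; case/andP: h1' => h11 h12.
case: v h1 h2 {h2'} Ox Hx Oz hx hx1 hx2 h11 h12 => v1 v2 /= h1 h2 Ox Hx Oz hx hx1 hx2 h11 h12.
have [hK|hK] := ltrP K.1 u.1.
- have zu : u.1 < z.1 by nra.
  have gE : g = u.1 - K.1 by rewrite /g ltr0_norm ?subr_lt0 // opprB.
  have DE : D = z.1 - u.1 by rewrite /D gtr0_norm ?subr_gt0.
  apply: (hc x z.1) => //. nra.
- have hK' : u.1 < K.1.
    by rewrite lt_neqAle hK andbT; apply/negP => /eqP h; move: neg; rewrite h subrr mul0r ltxx.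
  have zu : z.1 < u.1 by nra.
  have gE : g = K.1 - u.1 by rewrite /g gtr0_norm ?subr_gt0.
  have DE : D = u.1 - z.1 by rewrite /D ltr0_norm ?subr_lt0 // opprB.
  apply: (hc z.1 x) => //. nra.
Qed.
End Abs.

Arguments seg_ivt1 {R u w x}.
Arguments seg_ivt2 {R u w y}.
Arguments seg_prod1 {R a b v}.
Arguments seg_prod2 {R a b v}.
Arguments seg_sub {R a b u w}.

Section Abs2.
Context {R : realType}.
Local Notation pt := (R * R)%type.
Definition sw (p : pt) : pt := (p.2, p.1).
Definition swp (O : set pt) : set pt := [set v | O (sw v)].

Lemma seg_sw (a b v : pt) : seg (sw a) (sw b) (sw v) <-> seg a b v.
Proof.
split => /segP [t [ht [h1 h2]]]; apply/segP; exists t; split => //.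
Qed.

Lemma intr_sw O z : intr (swp O) (sw z) <-> intr O z.
Proof.
split => -[e e0 H]; exists e => // v h1 h2.
- by have := H (sw v) h2 h1; case: v {h1 h2}.
- by apply: H.
Qed.

Lemma HC_sw O : VC O -> HC (swp O).
Proof. move=> vc a b x y h1 h2 h; exact: (vc a b). Qed.

Lemma intrV O (C D z u K : pt) : VC O -> seg C D `<=` O ->
  (forall v, O v -> (v.1 - C.1) * (v.1 - D.1) <= 0) ->
  intr O z -> u.1 = z.1 -> seg C D K -> K.1 = z.1 ->
  (K.2 - u.2) * (z.2 - u.2) < 0 -> intr O u.
Proof.
move=> vc sO strip iz uz sK Kz neg.
apply/intr_sw.
apply: (@intrH _ (swp O) (sw C) (sw D) (sw z) (sw u) (sw K)) => //.
- exact: HC_sw.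
- move=> v /= h; apply: sO; apply/seg_sw; by case: v h.
- by move=> v /strip.
- exact/intr_sw.
- by apply/seg_sw.
Qed.

Lemma hpt O (A B z : pt) : (forall v, O v -> (v.2 - A.2) * (v.2 - B.2) <= 0) ->
  intr O z -> exists K, seg A B K /\ K.2 = z.2.
Proof.
move=> st /intr_in /st h; apply: seg_ivt2; nra.
Qed.

Lemma vpt O (C D z : pt) : (forall v, O v -> (v.1 - C.1) * (v.1 - D.1) <= 0) ->
  intr O z -> exists K, seg C D K /\ K.1 = z.1.
Proof.
move=> st /intr_in /st h; apply: seg_ivt1; nra.
Qed.

Lemma pair_eq (a b : pt) : a.1 = b.1 -> a.2 = b.2 -> a = b.
Proof. by case: a b => ? ? [? ?] /= -> ->. Qed.

End Abs2.
Arguments intrH {R O A B z u K}.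
Arguments intrV {R O C D z u K}.
Arguments hpt {R O A B z}.
Arguments vpt {R O C D z}.


Section PartA.
Context {R : realType}.
Local Notation pt := (R * R)%type.
Lemma sgn_aux (k p q z : R) : 0 < (k - p) * (k - q) -> 0 <= (k - p) * (z - p) ->
  (z - p) * (z - q) <= 0 -> z != p -> z != q -> (k - q) * (z - q) < 0.
Proof.
move=> h1 h2 h3 zp zq.
have [pq|qp|pq] := ltgtP p q.
- have zp' : p < z. rewrite lt_neqAle eq_sym zp /=. nra.
  have zq' : z < q. rewrite lt_neqAle zq /=. nra.
  have kp : p <= k by nra.
  nra.
- have zp' : z < p. rewrite lt_neqAle zp /=. nra.
  have zq' : q < z. rewrite lt_neqAle eq_sym zq /=. nra.
  have kp : k <= p by nra.
  nra.
- subst q. have : z = p by nra. by move/eqP; rewrite (negbTE zp).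
Qed.
Arguments sgn_aux {k p q z}.
Lemma sgn2 (k p q : R) : 0 < (k - p) * (k - q) -> 0 <= (k - p) * (q - p) -> p != q ->
  0 < (k - q) * (q - p).
Proof.
move=> h1 h2 pq.
have [pq'|qp|pq'] := ltgtP p q.
- have kp : p <= k by nra.
  nra.
- have kp : k <= p by nra.
  nra.
- by move: pq; rewrite pq' eqxx.
Qed.
Lemma sgn3 (w p q a b : R) : (w - p) * (w - q) <= 0 -> w != p ->
  0 <= (a - p) * (w - p) -> 0 < (b - p) * (p - q) -> (a - p) * (b - p) <= 0.
Proof.
move=> h1 wp h2 h3.
have [pq|qp|pq] := ltgtP p q.
- have wp' : p < w. rewrite lt_neqAle eq_sym wp /=. nra.
  have ap : p <= a by nra.
  have bp : b < p by nra.
  nra.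
- have wp' : w < p. rewrite lt_neqAle wp /=. nra.
  have ap : a <= p by nra.
  have bp : p < b by nra.
  nra.
- subst q. have : w = p by nra. by move/eqP; rewrite (negbTE wp).
Qed.

Arguments sgn2 {k p q}.
Arguments sgn3 {w p q a b}.

Lemma partA O (A B C D p q : pt) : HC O -> VC O -> seg A B `<=` O -> seg C D `<=` O ->
  (forall v, O v -> (v.2 - A.2) * (v.2 - B.2) <= 0) ->
  (forall v, O v -> (v.1 - C.1) * (v.1 - D.1) <= 0) ->
  ~ intr O p -> ~ intr O q ->
  (exists z, (seg p (q.1, p.2) `|` seg (q.1, p.2) q) z /\ intr O z) ->
  (exists w, (seg p (p.1, q.2) `|` seg (p.1, q.2) q) w /\ intr O w) ->
  exists v, (seg p (q.1, p.2) `|` seg (q.1, p.2) q) v /\ (seg A B v \/ seg C D v).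
Proof.
move=> hc vc sH sV stH stV np nq [z [Pz iz]] [w [Pw iw]].
case: (pselect (exists v, (seg p (q.1, p.2) `|` seg (q.1, p.2) q) v /\
   (seg A B v \/ seg C D v))) => // nh; exfalso.
have av1 : forall v, seg p (q.1, p.2) v -> ~ seg A B v /\ ~ seg C D v.
  move=> v hv; split => hh; apply: nh; exists v; split; by [left | tauto].
have av2 : forall v, seg (q.1, p.2) q v -> ~ seg A B v /\ ~ seg C D v.
  move=> v hv; split => hh; apply: nh; exists v; split; by [right | tauto].
have E1 : forall v, seg p (q.1, p.2) v <-> v.2 = p.2 /\ (v.1 - p.1) * (v.1 - q.1) <= 0.
  by move=> v; rewrite seg_hE.
have E2 : forall v, seg (q.1, p.2) q v <-> v.1 = q.1 /\ (v.2 - p.2) * (v.2 - q.2) <= 0.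
  by move=> v; rewrite seg_vE.
have E3 : forall v, seg p (p.1, q.2) v <-> v.1 = p.1 /\ (v.2 - p.2) * (v.2 - q.2) <= 0.
  by move=> v; rewrite seg_vE.
have E4 : forall v, seg (p.1, q.2) q v <-> v.2 = q.2 /\ (v.1 - p.1) * (v.1 - q.1) <= 0.
  by move=> v; rewrite seg_hE.
set c : pt := (q.1, p.2).
have ic : intr O c.
  case: Pz => [/E1 [z2 z1] | /E2 [z1 z2]].
  - have [K [sK K2]] := hpt stH iz.
    have Kout : 0 < (K.1 - p.1) * (K.1 - q.1).
      rewrite ltNge; apply/negP => h.
      have : seg p (q.1, p.2) K by apply/E1; split; [lra | exact: h].
      by case/av1.
    have Kp : 0 <= (K.1 - p.1) * (z.1 - p.1).
      rewrite leNgt; apply/negP => h; apply: np; exact: (intrH hc sH stH iz (esym z2) sK K2 h).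
    have zp : z.1 != p.1.
      apply/eqP => h; apply: np; have -> : p = z by apply: pair_eq. done.
    have [zq|zq] := eqVneq z.1 q.1.
      by have -> : c = z by apply: pair_eq.
    apply: (intrH hc sH stH iz _ sK K2); first by rewrite /c /= z2.
    rewrite /c /=.
    exact: (sgn_aux Kout Kp z1 zp zq).
  - have [K [sK K1]] := vpt stV iz.
    have Kout : 0 < (K.2 - p.2) * (K.2 - q.2).
      rewrite ltNge; apply/negP => h.
      have : seg (q.1, p.2) q K by apply/E2; split; [lra | exact: h].
      by case/av2.
    have Kq : 0 <= (K.2 - q.2) * (z.2 - q.2).
      rewrite leNgt; apply/negP => h; apply: nq; exact: (intrV vc sV stV iz (esym z1) sK K1 h).
    have zq : z.2 != q.2.
      apply/eqP => h; apply: nq; have -> : q = z by apply: pair_eq. done.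
    have [zp|zp] := eqVneq z.2 p.2.
      by have -> : c = z by apply: pair_eq.
    apply: (intrV vc sV stV iz _ sK K1); first by rewrite /c /= z1.
    rewrite /c /=.
    apply: (sgn_aux _ Kq _ zq zp); by rewrite mulrC.
have pq1 : p.1 != q.1.
  apply/eqP => h; apply: np; have -> : p = c by apply: pair_eq. done.
have pq2 : p.2 != q.2.
  apply/eqP => h; apply: nq; have -> : q = c by apply: pair_eq. done.
have [K [sK K2]] := hpt stH ic.
have Kout : 0 < (K.1 - p.1) * (K.1 - q.1).
  rewrite ltNge; apply/negP => h.
  have : seg p (q.1, p.2) K by apply/E1; split; [exact: K2 | exact: h].
  by case/av1.
have Kfar : 0 < (K.1 - q.1) * (q.1 - p.1).
  apply: sgn2 => //.
  rewrite leNgt; apply/negP => h; apply: np; exact: (intrH (u:=p) hc sH stH ic erefl sK K2 h).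
have [Kv [sKv Kv1]] := vpt stV ic.
have Kvout : 0 < (Kv.2 - p.2) * (Kv.2 - q.2).
  rewrite ltNge; apply/negP => h.
  have : seg (q.1, p.2) q Kv by apply/E2; split; [exact: Kv1 | exact: h].
  by case/av2.
have Kvfar : 0 < (Kv.2 - p.2) * (p.2 - q.2).
  apply: sgn2; first by rewrite mulrC.
    rewrite leNgt; apply/negP => h; apply: nq; exact: (intrV (u:=q) vc sV stV ic erefl sKv Kv1 h).
  by rewrite eq_sym.
case: Pw => [/E3 [w1 w2] | /E4 [w2 w1]].
- have wp : w.2 != p.2.
    apply/eqP => h; apply: np; have -> : p = w by apply: pair_eq. done.
  have [Kp [sKp Kp1]] := vpt stV iw.
  have Kpn : 0 <= (Kp.2 - p.2) * (w.2 - p.2).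
    rewrite leNgt; apply/negP => h; apply: np; exact: (intrV vc sV stV iw (esym w1) sKp Kp1 h).
  have := sgn3 w2 wp Kpn Kvfar => hs.
  have [Q [sQ Q2]] := seg_ivt2 hs.
  have sQ' := seg_prod1 sQ.
  rewrite Kp1 w1 Kv1 in sQ'.
  have : seg p (q.1, p.2) Q by apply/E1; split.
  by case/av1 => _; apply; exact: (seg_sub sKp sKv _ sQ).
- have wq : w.1 != q.1.
    apply/eqP => h; apply: nq; have -> : q = w by apply: pair_eq. done.
  have [Kq [sKq Kq2]] := hpt stH iw.
  have Kqn : 0 <= (Kq.1 - q.1) * (w.1 - q.1).
    rewrite leNgt; apply/negP => h; apply: nq; exact: (intrH hc sH stH iw (esym w2) sKq Kq2 h).
  have w1' : (w.1 - q.1) * (w.1 - p.1) <= 0 by rewrite mulrC.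
  have := sgn3 w1' wq Kqn Kfar => hs.
  have hs' : (K.1 - q.1) * (Kq.1 - q.1) <= 0 by rewrite mulrC.
  have [Q [sQ Q1]] := seg_ivt1 hs'.
  have sQ' := seg_prod2 sQ.
  rewrite K2 Kq2 w2 in sQ'.
  have : seg (q.1, p.2) q Q by apply/E2; split.
  by case/av2 => h _; apply: h; exact: (seg_sub sK sKq _ sQ).
Qed.
End PartA.

Section Conv.
Context {R : realType}.
Local Notation pt := (R * R)%type.

Lemma rlength1 (a : pt) : rlength [:: a] = 0.
Proof. by rewrite /rlength /= big_ord0. Qed.

Lemma rlength_cons (a b : pt) l : rlength (a :: b :: l) = d1 a b + rlength (b :: l).
Proof. by rewrite /rlength /= big_ord_recl /=. Qed.

Lemma rl_tri (a : pt) l : d1 a (last a l) <= rlength (a :: l).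
Proof.
elim: l a => [|b l IH] a /=.
  by rewrite rlength1 /d1 !subrr normr0 addr0.
rewrite rlength_cons; have := IH b; rewrite /d1 => h.
have := ler_distD b.1 a.1 (last b l).1; have := ler_distD b.2 a.2 (last b l).2.
lra.
Qed.

Lemma rl_node2 (a : pt) l c : c \in a :: l ->
  `|a.1 - (last a l).1| + `|a.2 - c.2| + `|c.2 - (last a l).2| <= rlength (a :: l).
Proof.
elim: l a => [|b l IH] a /=.
  by rewrite inE => /eqP ->; rewrite rlength1 !subrr normr0 !addr0.
rewrite inE => /orP [/eqP ->|hc].
  have := rl_tri a (b :: l); rewrite /d1 /= subrr normr0 addr0. lra.
rewrite rlength_cons; have := IH b hc; rewrite /d1 => h.
have := ler_distD b.1 a.1 (last b l).1; have := ler_distD b.2 a.2 c.2.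
lra.
Qed.

Lemma rl_node1 (a : pt) l c : c \in a :: l ->
  `|a.2 - (last a l).2| + `|a.1 - c.1| + `|c.1 - (last a l).1| <= rlength (a :: l).
Proof.
elim: l a => [|b l IH] a /=.
  by rewrite inE => /eqP ->; rewrite rlength1 !subrr normr0 !addr0.
rewrite inE => /orP [/eqP ->|hc].
  have := rl_tri a (b :: l); rewrite /d1 /= subrr normr0 addr0. lra.
rewrite rlength_cons; have := IH b hc; rewrite /d1 => h.
have := ler_distD b.2 a.2 (last b l).2; have := ler_distD b.1 a.1 c.1.
lra.
Qed.

Lemma pathset_cons (a b : pt) l v : pathset (b :: l) v -> pathset (a :: b :: l) v.
Proof.
case=> [[i hi ->]|[i hi hs]]; [left | right]; exists i.+1 => //.
Qed.

Lemma pathset_seg (a b : pt) l v : seg a b v -> pathset (a :: b :: l) v.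
Proof. by move=> h; right; exists 0%N. Qed.

Lemma pathset_head (a : pt) l : pathset (a :: l) a.
Proof. by left; exists 0%N. Qed.

Lemma btw_shift (x a b L : R) : (x - a) * (x - L) <= 0 -> 0 < (x - a) * (x - b) ->
  (x - b) * (x - L) <= 0.
Proof.
move=> h1 h2.
have [xa|xa] := ltrP a x.
  have xb : b < x by nra.
  have xL : x <= L by nra.
  nra.
have xa' : x < a by rewrite lt_neqAle xa andbT; apply/negP => /eqP e; move: h2; rewrite e subrr mul0r ltxx.
have xb : x < b by nra.
have xL : L <= x by nra.
nra.
Qed.

Lemma hfill (a : pt) l (x y : R) : (forall c, c \in a :: l -> c.2 = y) ->
  (x - a.1) * (x - (last a l).1) <= 0 -> pathset (a :: l) (x, y).
Proof.
elim: l a => [|b l IH] a /= hy hx.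
  have -> : (x, y) = a.
    apply: pair_eq => /=; last by rewrite (hy a) // mem_head.
    have : (x - a.1) ^+ 2 == 0 by rewrite eq_le sqr_ge0 andbT expr2.
    by rewrite sqrf_eq0 subr_eq0 => /eqP.
  exact: pathset_head.
have ya := hy a (mem_head _ _); have yb : b.2 = y by apply: hy; rewrite !inE eqxx orbT.
have [h|h] := lerP ((x - a.1) * (x - b.1)) 0.
  by apply: pathset_seg; apply/seg_hE; [rewrite ya yb | split].
apply: pathset_cons; apply: IH.
  by move=> c hc; apply: hy; rewrite inE hc orbT.
exact: btw_shift hx h.
Qed.

Lemma vfill (a : pt) l (x y : R) : (forall c, c \in a :: l -> c.1 = x) ->
  (y - a.2) * (y - (last a l).2) <= 0 -> pathset (a :: l) (x, y).
Proof.
elim: l a => [|b l IH] a /= hy hx.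
  have -> : (x, y) = a.
    apply: pair_eq => /=; first by rewrite (hy a) // mem_head.
    have : (y - a.2) ^+ 2 == 0 by rewrite eq_le sqr_ge0 andbT expr2.
    by rewrite sqrf_eq0 subr_eq0 => /eqP.
  exact: pathset_head.
have ya := hy a (mem_head _ _); have yb : b.1 = x by apply: hy; rewrite !inE eqxx orbT.
have [h|h] := lerP ((y - a.2) * (y - b.2)) 0.
  by apply: pathset_seg; apply/seg_vE; [rewrite ya yb | split].
apply: pathset_cons; apply: IH.
  by move=> c hc; apply: hy; rewrite inE hc orbT.
exact: btw_shift hx h.
Qed.

Lemma region_HC (vs : seq pt) : rect_convex vs -> HC (region vs).
Proof.
move=> rc a b x y ha hb hx.
have [ps [[ps0 _] h0 hl sub len]] := rc _ _ ha hb.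
case: ps ps0 h0 hl sub len => // h l _ /= h0 hl sub len.
rewrite nth_last /= in hl.
subst h.
apply: sub; apply: hfill; last by rewrite hl.
move=> c /rl_node2; rewrite len hl /d1 /= subrr normr0 addr0 => hc.
have := normr_ge0 (y - c.2); have := normr_ge0 (c.2 - y).
move=> n1 n2.
have : `|y - c.2| == 0 by rewrite eq_le normr_ge0 andbT; lra.
by rewrite normr_eq0 subr_eq0 => /eqP.
Qed.

Lemma region_VC (vs : seq pt) : rect_convex vs -> VC (region vs).
Proof.
move=> rc a b x y ha hb hx.
have [ps [[ps0 _] h0 hl sub len]] := rc _ _ ha hb.
case: ps ps0 h0 hl sub len => // h l _ /= h0 hl sub len.
rewrite nth_last /= in hl.
subst h.
apply: sub; apply: vfill; last by rewrite hl.
move=> c /rl_node1; rewrite len hl /d1 /= subrr normr0 add0r => hc.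
have := normr_ge0 (x - c.1); have := normr_ge0 (c.1 - x).
move=> n1 n2.
have : `|x - c.1| == 0 by rewrite eq_le normr_ge0 andbT; lra.
by rewrite normr_eq0 subr_eq0 => /eqP.
Qed.
End Conv.

Lemma nxtE' (n j : nat) : (j < n)%N -> (j.+1 %% n = if (j.+1 < n)%N then j.+1 else 0)%N.
Proof.
move=> h; case: ifP => h2; first by rewrite modn_small.
have -> : j.+1 = n by lia.
by rewrite modnn.
Qed.

Section Poly.
Context {R : realType}.
Local Notation pt := (R * R)%type.
Implicit Types vs : seq pt.

Lemma nxtE vs j : (j < size vs)%N ->
  nxt vs j = if (j.+1 < size vs)%N then j.+1 else 0%N.
Proof. exact: nxtE'. Qed.

Arguments nxtE {vs j}.
Lemma nxt_lt vs j : (j < size vs)%N -> (nxt vs j < size vs)%N.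
Proof. move=> h; rewrite nxtE //; case: ifP => //; lia. Qed.
Arguments nxt_lt {vs j}.

Definition prv vs j := if j is k.+1 then k else (size vs).-1.

Lemma prv_lt vs j : (j < size vs)%N -> (prv vs j < size vs)%N.
Proof. case: j => /= [|k]; lia. Qed.

Arguments prv_lt {vs j}.
Lemma nxt_prv vs j : (j < size vs)%N -> nxt vs (prv vs j) = j.
Proof.
move=> h; rewrite nxtE ?prv_lt //; case: j h => [|k] /= h; case: ifP; lia.
Qed.

Lemma collinear_eq1 (a b c : pt) : a.1 = b.1 -> a.1 = c.1 -> collinear a b c.
Proof. by move=> e1 e2; rewrite /collinear -e1 -e2 !subrr !mulr0 mul0r subrr. Qed.

Lemma collinear_eq2 (a b c : pt) : a.2 = b.2 -> a.2 = c.2 -> collinear a b c.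
Proof. by move=> e1 e2; rewrite /collinear -e1 -e2 !subrr !mulr0 mul0r subrr. Qed.

Lemma collinear_same (a c : pt) : collinear a a c.
Proof. by rewrite /collinear !subrr !mul0r subrr. Qed.

Lemma vtx_inj vs i j : general_position vs -> (3 <= size vs)%N ->
  (i < size vs)%N -> (j < size vs)%N -> vtx vs i = vtx vs j -> i = j.
Proof.
move=> gp n3 hi hj e; apply/eqP; apply/negP => /negP ij.
pose k := if (0 != i) && (0 != j) then 0%N else if (1 != i) && (1 != j) then 1%N else 2%N.
have hk : (k < size vs)%N by rewrite /k; repeat case: ifP => _; lia.
have ki : i != k by rewrite /k; repeat case: ifP; lia.
have kj : j != k by rewrite /k; repeat case: ifP; lia.
by have := gp i j k hi hj hk ij kj ki; rewrite e collinear_same.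
Qed.

Arguments vtx_inj {vs i j}.
Lemma nxt_neq vs j : (2 <= size vs)%N -> (j < size vs)%N -> nxt vs j != j.
Proof. move=> h2 hj; rewrite nxtE //; case: ifP; lia. Qed.

Lemma nxt2_neq vs j : (3 <= size vs)%N -> (j < size vs)%N -> nxt vs (nxt vs j) != j.
Proof.
move=> h2 hj; have hn := nxt_lt hj.
have := nxtE hj; case: ifP => c1 e1; rewrite e1 in hn *; rewrite nxtE //; case: ifP; lia.
Qed.

Lemma three_idx vs j k : (3 <= size vs)%N -> (j < size vs)%N -> (k < size vs)%N -> j != k ->
  exists a b c, [/\ (a < size vs)%N, (b < size vs)%N, (c < size vs)%N,
    [/\ a != b, b != c & a != c] &
    forall P : nat -> Prop, P j -> P (nxt vs j) -> P k -> P (nxt vs k) -> [/\ P a, P b & P c]].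
Proof.
move=> n3 hj hk jk.
have n2 : (2 <= size vs)%N by lia.
have hnj := nxt_lt hj; have hnk := nxt_lt hk.
have [e|ne] := eqVneq k (nxt vs j).
- exists j, (nxt vs j), (nxt vs k).
  have d1 : j != nxt vs j by rewrite eq_sym nxt_neq.
  have d2 : nxt vs j != nxt vs k by rewrite e eq_sym; apply: nxt_neq; rewrite -?e.
  have d3 : j != nxt vs k by rewrite e eq_sym nxt2_neq.
  split; [exact: hj | exact: hnj | exact: hnk | by split | by move=> P; split].
- exists j, (nxt vs j), k.
  have d1 : j != nxt vs j by rewrite eq_sym nxt_neq.
  have d2 : nxt vs j != k by rewrite eq_sym.
  split; [exact: hj | exact: hnj | exact: hk | by split | by move=> P; split].
Qed.
Arguments three_idx {vs j k}.
Lemma two_edges2 vs j k (Y : R) : general_position vs -> (3 <= size vs)%N ->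
  (j < size vs)%N -> (k < size vs)%N -> j != k ->
  (vtx vs j).2 = Y -> (vtx vs (nxt vs j)).2 = Y ->
  (vtx vs k).2 = Y -> (vtx vs (nxt vs k)).2 = Y -> False.
Proof.
move=> gp n3 hj hk jk e1 e2 e3 e4.
have [a [b [c [ha hb hc [ab bc ac] H]]]] := three_idx n3 hj hk jk.
have [pa pb pc] := H (fun i => (vtx vs i).2 = Y) e1 e2 e3 e4.
have := gp a b c ha hb hc ab bc ac.
by rewrite collinear_eq2 // ?pa ?pb ?pc.
Qed.

Lemma two_edges1 vs j k (X : R) : general_position vs -> (3 <= size vs)%N ->
  (j < size vs)%N -> (k < size vs)%N -> j != k ->
  (vtx vs j).1 = X -> (vtx vs (nxt vs j)).1 = X ->
  (vtx vs k).1 = X -> (vtx vs (nxt vs k)).1 = X -> False.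
Proof.
move=> gp n3 hj hk jk e1 e2 e3 e4.
have [a [b [c [ha hb hc [ab bc ac] H]]]] := three_idx n3 hj hk jk.
have [pa pb pc] := H (fun i => (vtx vs i).1 = X) e1 e2 e3 e4.
have := gp a b c ha hb hc ab bc ac.
by rewrite collinear_eq1 // ?pa ?pb ?pc.
Qed.

End Poly.

Section Reg.
Context {R : realType}.
Local Notation pt := (R * R)%type.
Implicit Types vs : seq pt.

Lemma bdry_region vs p : bdry vs p -> region vs p.
Proof.
move=> hb hu; have [g [_ g0 nb _]] := hu 0.
by apply: (nb 0); [rewrite lexx ler01 | rewrite g0].
Qed.

Lemma vtx_bdry vs i : (i < size vs)%N -> bdry vs (vtx vs i).
Proof. by move=> hi; exists i => //; exact: seg_l. Qed.

Lemma vtx_region vs i : (i < size vs)%N -> region vs (vtx vs i).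
Proof. by move=> hi; apply: bdry_region; apply: vtx_bdry. Qed.

Arguments vtx_region {vs i}.
Arguments vtx_bdry {vs i}.
Lemma edge_region vs i p : (i < size vs)%N -> edge vs i p -> region vs p.
Proof. by move=> hi he; apply: bdry_region; exists i. Qed.

Lemma xmin_uniq vs x x' : is_xmin vs x -> is_xmin vs x' -> x = x'.
Proof.
move=> [h1 [p1 r1 e1]] [h2 [p2 r2 e2]]; apply/le_anti/andP; split.
  by rewrite -e2; exact: h1.
by rewrite -e1; exact: h2.
Qed.
Lemma xmax_uniq vs x x' : is_xmax vs x -> is_xmax vs x' -> x = x'.
Proof.
move=> [h1 [p1 r1 e1]] [h2 [p2 r2 e2]]; apply/le_anti/andP; split.
  by rewrite -e1; exact: h2.
by rewrite -e2; exact: h1.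
Qed.
Lemma ymin_uniq vs x x' : is_ymin vs x -> is_ymin vs x' -> x = x'.
Proof.
move=> [h1 [p1 r1 e1]] [h2 [p2 r2 e2]]; apply/le_anti/andP; split.
  by rewrite -e2; exact: h1.
by rewrite -e1; exact: h2.
Qed.
Lemma ymax_uniq vs x x' : is_ymax vs x -> is_ymax vs x' -> x = x'.
Proof.
move=> [h1 [p1 r1 e1]] [h2 [p2 r2 e2]]; apply/le_anti/andP; split.
  by rewrite -e1; exact: h2.
by rewrite -e2; exact: h1.
Qed.

Arguments xmin_uniq {vs x x'}.
Arguments xmax_uniq {vs x x'}.
Arguments ymin_uniq {vs x x'}.
Arguments ymax_uniq {vs x x'}.
Lemma contg (a b d : R) : continuous (fun t : R => (a + t * d, b)).
Proof.
move=> t. apply: (@cvg_pair _ _ _ (nbhs t) (nbhs (a + t * d)) (nbhs b)); try exact: nbhs_filter.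
  apply: cvgD; first exact: cvg_cst.
  apply: cvgMl; exact: cvg_id.
exact: cvg_cst.
Qed.

Lemma escape vs (z : pt) (d : R) : `|d| = 1 -> ~ bdry vs z ->
  (forall s, 0 < s -> ~ bdry vs (z.1 + s * d, z.2)) -> ~ region vs z.
Proof.
move=> hd nz hs; rewrite /region => h; apply: h => M.
set L := `|M| + `|z.1| + 1.
have L0 : 0 < L by rewrite /L; have := normr_ge0 M; have := normr_ge0 z.1; lra.
exists (fun t => (z.1 + t * (L * d), z.2)); split.
- apply: continuous_subspaceT; exact: contg.
- by apply: pair_eq => /=; [ring | done].
- move=> t /andP [t0 t1].
  have [->|tn] := eqVneq t 0.
    by have -> : (z.1 + 0 * (L * d), z.2) = z by apply: pair_eq => /=; [ring | done].
  rewrite mulrA; apply: hs; apply: mulr_gt0 => //.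
  by rewrite lt_neqAle eq_sym tn t0.
- rewrite /= mul1r.
  have e0 : z.1 + L * d - z.1 = L * d by ring.
  have h1 := ler_normB (z.1 + L * d) z.1; rewrite e0 in h1.
  have e : `|L * d| = L by rewrite normrM hd mulr1 gtr0_norm.
  rewrite e in h1.
  have LE : L = `|M| + `|z.1| + 1 by [].
  have := ler_norm M; have := normr_ge0 z.2; have := normr_ge0 z.1.
  lra.
Qed.

Lemma left_bdry vs x0 (z : pt) : is_xmin vs x0 -> region vs z -> z.1 = x0 -> bdry vs z.
Proof.
move=> [hx _] rz ez; case: (pselect (bdry vs z)) => // nb; exfalso.
apply: (@escape vs z (-1) _ nb _ rz); first by rewrite normrN normr1.
move=> s s0 /bdry_region /hx /=; rewrite ez; lra.
Qed.

Lemma right_bdry vs x1 (z : pt) : is_xmax vs x1 -> region vs z -> z.1 = x1 -> bdry vs z.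
Proof.
move=> [hx _] rz ez; case: (pselect (bdry vs z)) => // nb; exfalso.
apply: (@escape vs z 1 _ nb _ rz); first by rewrite normr1.
move=> s s0 /bdry_region /hx /=; rewrite ez; lra.
Qed.


Lemma ext_pt (a b X t : R) : 0 <= t <= 1 -> X = a + t * (b - a) ->
  (X <= a /\ X <= b) \/ (a <= X /\ b <= X) -> a = X \/ b = X.
Proof.
move=> /andP [t0 t1] e h.
have [et|t1'] := eqVneq t 1; first by right; rewrite e et; ring.
left.
have t1s : t < 1 by rewrite lt_neqAle t1' t1.
case: h => [[h1 h2]|[h1 h2]]; nra.
Qed.

Arguments ext_pt {a b X t}.
Lemma ext_x vs X (p : pt) : (is_xmin vs X \/ is_xmax vs X) -> region vs p ->
  (X <= p.1) \/ (p.1 <= X).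
Proof. by case=> [[h _]|[h _]] rp; [left|right]; apply: h. Qed.

Lemma corner_vtx vs X Y : rectilinear vs ->
  (is_xmin vs X \/ is_xmax vs X) -> (is_ymin vs Y \/ is_ymax vs Y) ->
  bdry vs (X, Y) -> exists2 j, (j < size vs)%N & vtx vs j = (X, Y).
Proof.
move=> rl hX hY [i hi /segP [t [ht [e1 e2]]]].
have hn : (nxt vs i < size vs)%N by apply: nxt_lt.
have ra := vtx_region hi; have rb := vtx_region hn.
set a := vtx vs i in ra e1 e2 *; set b := vtx vs (nxt vs i) in rb e1 e2 *.
have sX : (X <= a.1 /\ X <= b.1) \/ (a.1 <= X /\ b.1 <= X).
  by case: hX => [[h _]|[h _]]; [left|right]; split; apply: h.
have sY : (Y <= a.2 /\ Y <= b.2) \/ (a.2 <= Y /\ b.2 <= Y).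
  by case: hY => [[h _]|[h _]]; [left|right]; split; apply: h.
case: (rl i hi) => /= hab.
- have eX : a.1 = X by rewrite /= in e1; rewrite e1 -/a -/b hab subrr mulr0 addr0.
  case: (ext_pt ht e2 sY) => h.
    by exists i => //; apply: pair_eq.
  by exists (nxt vs i) => //; apply: pair_eq => //; rewrite -/b -hab.
- have eY : a.2 = Y by rewrite /= in e2; rewrite e2 -/a -/b hab subrr mulr0 addr0.
  case: (ext_pt ht e1 sX) => h.
    by exists i => //; apply: pair_eq.
  by exists (nxt vs i) => //; apply: pair_eq => //; rewrite -/b -hab.
Qed.

Lemma vert_ext_edge vs k X : (k < size vs)%N -> (is_xmin vs X \/ is_xmax vs X) ->
  (vtx vs k).1 = X -> (vtx vs (nxt vs k)).1 = X -> extreme_edge vs k.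
Proof.
move=> hk [h|h] e1 e2; [left | right; left]; split => //; by exists X.
Qed.

Lemma hor_ext_edge vs k Y : (k < size vs)%N -> (is_ymin vs Y \/ is_ymax vs Y) ->
  (vtx vs k).2 = Y -> (vtx vs (nxt vs k)).2 = Y -> extreme_edge vs k.
Proof.
move=> hk [h|h] e1 e2; [right; right; left | right; right; right]; split => //; by exists Y.
Qed.

Arguments nxt_neq {R vs j}.
Arguments nxt2_neq {R vs j}.
Arguments vert_ext_edge {vs k X}.
Arguments hor_ext_edge {vs k Y}.
Arguments two_edges2 {R vs j k Y}.
Arguments two_edges1 {R vs j k X}.
Lemma corner_ext vs X Y j : general_position vs -> (3 <= size vs)%N -> rectilinear vs ->
  (is_xmin vs X \/ is_xmax vs X) -> (is_ymin vs Y \/ is_ymax vs Y) ->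
  (j < size vs)%N -> vtx vs j = (X, Y) -> extreme_corner vs j.
Proof.
move=> gp n3 rl hX hY hj ej.
have n2 : (2 <= size vs)%N by lia.
set pj := prv vs j; have hpj : (pj < size vs)%N by apply: prv_lt.
have npj : nxt vs pj = j by apply: nxt_prv.
have hnj : (nxt vs j < size vs)%N by apply: nxt_lt.
have pjj : pj != j.
  apply/eqP => e; move: npj; rewrite e => npj.
  by have := nxt_neq n2 hj; rewrite npj eqxx.
have njp : pj != nxt vs j.
  apply/eqP => e; have := nxt2_neq n3 hpj; by rewrite npj -e eqxx.
have jnj : j != nxt vs j by rewrite eq_sym nxt_neq.
have cl := gp pj j (nxt vs j) hpj hj hnj pjj jnj njp.
have rj := rl j hj; have rp := rl pj hpj; rewrite npj in rp.
have ejx : (vtx vs j).1 = X by rewrite ej.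
have ejy : (vtx vs j).2 = Y by rewrite ej.
split => //.
case: rj => rj; case: rp => rp.
- by move: cl; rewrite collinear_eq1 // rp.
- exists j, pj; split => //; first by rewrite eq_sym.
  + by apply: (vert_ext_edge hj hX); rewrite -?rj.
  + by apply: (hor_ext_edge hpj hY); rewrite ?npj ?rp.
  + by left.
  + by right; rewrite npj.
- exists j, pj; split => //; first by rewrite eq_sym.
  + by apply: (hor_ext_edge hj hY); rewrite -?rj.
  + by apply: (vert_ext_edge hpj hX); rewrite ?npj ?rp.
  + by left.
  + by right; rewrite npj.
- by move: cl; rewrite collinear_eq2 // rp.
Qed.

Lemma ext_lt vs e : extreme_edge vs e -> (e < size vs)%N.
Proof. by case=> [[]|[[]|[[]|[]]]]. Qed.

Lemma ext_class vs e (v : pt) x0 x1 : is_xmin vs x0 -> is_xmax vs x1 ->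
  extreme_edge vs e -> endpoint_of_edge vs v e ->
  [\/ v.1 = x0, v.1 = x1 | ((vtx vs e).2 = v.2 /\ (vtx vs (nxt vs e)).2 = v.2)].
Proof.
move=> h0 h1 [[_ [xa ha ea] [xb hb eb]]|[[_ [xa ha ea] [xb hb eb]]|[[_ [ya ha ea] [yb hb eb]]|[_ [ya ha ea] [yb hb eb]]]]] [->|->].
- by constructor 1; rewrite ea (xmin_uniq ha h0).
- by constructor 1; rewrite eb (xmin_uniq hb h0).
- by constructor 2; rewrite ea (xmax_uniq ha h1).
- by constructor 2; rewrite eb (xmax_uniq hb h1).
- by constructor 3; rewrite ea eb (ymin_uniq ha hb).
- by constructor 3; rewrite ea eb (ymin_uniq ha hb).
- by constructor 3; rewrite ea eb (ymax_uniq ha hb).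
- by constructor 3; rewrite ea eb (ymax_uniq ha hb).
Qed.

Lemma ext_class' vs e (v : pt) y0 y1 : is_ymin vs y0 -> is_ymax vs y1 ->
  extreme_edge vs e -> endpoint_of_edge vs v e ->
  [\/ v.2 = y0, v.2 = y1 | ((vtx vs e).1 = v.1 /\ (vtx vs (nxt vs e)).1 = v.1)].
Proof.
move=> h0 h1 [[_ [xa ha ea] [xb hb eb]]|[[_ [xa ha ea] [xb hb eb]]|[[_ [ya ha ea] [yb hb eb]]|[_ [ya ha ea] [yb hb eb]]]]] [->|->].
- by constructor 3; rewrite ea eb (xmin_uniq ha hb).
- by constructor 3; rewrite ea eb (xmin_uniq ha hb).
- by constructor 3; rewrite ea eb (xmax_uniq ha hb).
- by constructor 3; rewrite ea eb (xmax_uniq ha hb).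
- by constructor 1; rewrite ea (ymin_uniq ha h0).
- by constructor 1; rewrite eb (ymin_uniq hb h0).
- by constructor 2; rewrite ea (ymax_uniq ha h1).
- by constructor 2; rewrite eb (ymax_uniq hb h1).
Qed.

Arguments ext_class {vs e v x0 x1}.
Arguments ext_class' {vs e v y0 y1}.
Arguments ext_lt {vs e}.
Lemma ext_corner_x vs i x0 x1 : general_position vs -> (3 <= size vs)%N ->
  is_xmin vs x0 -> is_xmax vs x1 -> extreme_corner vs i ->
  (vtx vs i).1 = x0 \/ (vtx vs i).1 = x1.
Proof.
move=> gp n3 h0 h1 [hi [j [k [jk ej ek pj pk]]]].
case: (ext_class h0 h1 ej pj) => [?|?|[a1 a2]]; [by left|by right|].
case: (ext_class h0 h1 ek pk) => [?|?|[b1 b2]]; [by left|by right|].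
exfalso; exact: (two_edges2 gp n3 (ext_lt ej) (ext_lt ek) jk a1 a2 b1 b2).
Qed.

Lemma ext_corner_y vs i y0 y1 : general_position vs -> (3 <= size vs)%N ->
  is_ymin vs y0 -> is_ymax vs y1 -> extreme_corner vs i ->
  (vtx vs i).2 = y0 \/ (vtx vs i).2 = y1.
Proof.
move=> gp n3 h0 h1 [hi [j [k [jk ej ek pj pk]]]].
case: (ext_class' h0 h1 ej pj) => [?|?|[a1 a2]]; [by left|by right|].
case: (ext_class' h0 h1 ek pk) => [?|?|[b1 b2]]; [by left|by right|].
exfalso; exact: (two_edges1 gp n3 (ext_lt ej) (ext_lt ek) jk a1 a2 b1 b2).
Qed.
End Reg.

Arguments small4 {R a b c d}.
Section Box.
Context {R : realType}.
Local Notation pt := (R * R)%type.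

Lemma exists_m (a b Y : R) : 0 < (a - Y) * (b - Y) ->
  exists m, [/\ m != Y, (m - Y) * (m - a) <= 0 & (m - Y) * (m - b) <= 0].
Proof.
move=> h.
have [ab|ba] := lerP a b.
- have [Ya|aY] := ltrP Y a.
  + exists a; split; [by rewrite gt_eqF | nra | nra].
  + have bY : b < Y by nra.
    exists b; split; [by rewrite lt_eqF | nra | nra].
- have [Yb|bY] := ltrP Y b.
  + exists b; split; [by rewrite gt_eqF | nra | nra].
  + have aY : a < Y by nra.
    exists a; split; [by rewrite lt_eqF | nra | nra].
Qed.

Arguments exists_m {a b Y}.
Lemma boxes_h (O : set pt) x0 x1 y0 y1 Y a b t1 t2 : HC O -> VC O ->
  (forall v, O v -> [/\ x0 <= v.1, v.1 <= x1, y0 <= v.2 & v.2 <= y1]) ->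
  x0 < x1 -> y0 < y1 -> (Y = y0 \/ Y = y1) ->
  O (x0, Y) -> O (x1, Y) -> O (x0, a) -> a != Y -> O (x1, b) -> b != Y ->
  O (t1, y0 + y1 - Y) -> O (t2, y0 + y1 - Y) -> t1 != t2 ->
  (forall x, x0 < x < x1 -> exists z, intr O z /\ z.1 = x) /\
  (forall y, y0 < y < y1 -> exists z, intr O z /\ z.2 = y).
Proof.
move=> hc vc Bd x01 y01 hY O0 O1 Oa aY Ob bY Ot1 Ot2 t12.
set Y' := y0 + y1 - Y in Ot1 Ot2.
have [ra1 ra2 ra3 ra4] := Bd _ Oa; have [rb1 rb2 rb3 rb4] := Bd _ Ob.
have [r11 r12 r13 r14] := Bd _ Ot1; have [r21 r22 r23 r24] := Bd _ Ot2.
rewrite /= in ra1 ra2 ra3 ra4 rb1 rb2 rb3 rb4 r11 r12 r13 r14 r21 r22 r23 r24.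
have rowY : forall x, x0 <= x <= x1 -> O (x, Y).
  move=> x /andP [h1 h2]; apply: (hc x0 x1) => //; nra.
split.
- move=> x /andP [h1 h2].
  have same : 0 < (a - Y) * (b - Y).
    have aY' : a - Y != 0 by rewrite subr_eq0.
    have bY' : b - Y != 0 by rewrite subr_eq0.
    case: hY => eY; rewrite eY in aY' bY' *.
    + apply: mulr_gt0; rewrite lt_neqAle eq_sym ?aY' ?bY' /=; lra.
    + rewrite -mulrNN; apply: mulr_gt0; rewrite oppr_gt0 lt_neqAle ?aY' ?bY' /=; lra.
  have [m [mY m1 m2]] := exists_m same.
  have Om0 : O (x0, m) by apply: (vc Y a) => //.
  have Om1 : O (x1, m) by apply: (vc Y b) => //.
  have d0 : 0 < `|m - Y| / 2 by rewrite divr_gt0 // normr_gt0 subr_eq0.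
  have g1 : 0 < x - x0 by rewrite subr_gt0.
  have g2 : 0 < x1 - x by rewrite subr_gt0.
  have [e e0 [e1 e2 e3 _]] := small4 g1 g2 d0 d0.
  exists (x, (Y + m) / 2); split => //; exists e => // -[v1 v2] /= hv1 hv2.
  move: hv1 hv2; rewrite !ltr_norml => /andP [hv1 hv1'] /andP [hv2 hv2'].
  apply: (vc Y m).
    apply: rowY; apply/andP; split; lra.
    apply: (hc x0 x1) => //; nra.
  have [mY'|Ym] := ltrP m Y.
  + move: e3; rewrite ltr0_norm ?subr_lt0 // => e3. nra.
  + move: e3; rewrite ger0_norm ?subr_ge0 // => e3. nra.
- move=> y /andP [h1 h2].
  have [l [r [lr Ol Or]]] : exists l r, [/\ l < r, O (l, Y') & O (r, Y')].
    have [t|t] := ltrP t1 t2.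
      by exists t1, t2.
    exists t2, t1; split => //; rewrite lt_neqAle t andbT; by rewrite eq_sym.
  have [lr1 lr2 _ _] := Bd _ Ol; have [rr1 rr2 _ _] := Bd _ Or.
  rewrite /= in lr1 lr2 rr1 rr2.
  have g1 : 0 < (r - l) / 2 by apply: divr_gt0; [rewrite subr_gt0 | ].
  have g2 : 0 < y - y0 by rewrite subr_gt0.
  have g3 : 0 < y1 - y by rewrite subr_gt0.
  have [e e0 [e1 e2 e3 _]] := small4 g1 g2 g3 g3.
  exists ((l + r) / 2, y); split => //; exists e => // -[v1 v2] /= hv1 hv2.
  move: hv1 hv2; rewrite !ltr_norml => /andP [hv1 hv1'] /andP [hv2 hv2'].
  apply: (vc Y Y').
    apply: rowY; apply/andP; split; lra.
    apply: (hc l r) => //; nra.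
  rewrite /Y'; case: hY => ->; nra.
Qed.


Lemma VC_sw (O : set pt) : HC O -> VC (swp O).
Proof. move=> hc a b x y h1 h2 h; exact: (hc a b). Qed.

Lemma boxes_v (O : set pt) x0 x1 y0 y1 X a b t1 t2 : HC O -> VC O ->
  (forall v, O v -> [/\ x0 <= v.1, v.1 <= x1, y0 <= v.2 & v.2 <= y1]) ->
  x0 < x1 -> y0 < y1 -> (X = x0 \/ X = x1) ->
  O (X, y0) -> O (X, y1) -> O (a, y0) -> a != X -> O (b, y1) -> b != X ->
  O (x0 + x1 - X, t1) -> O (x0 + x1 - X, t2) -> t1 != t2 ->
  (forall x, x0 < x < x1 -> exists z, intr O z /\ z.1 = x) /\
  (forall y, y0 < y < y1 -> exists z, intr O z /\ z.2 = y).
Proof.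
move=> hc vc Bd x01 y01 hX O0 O1 Oa aX Ob bX Ot1 Ot2 t12.
have [H1 H2] := @boxes_h (swp O) y0 y1 x0 x1 X a b t1 t2 (HC_sw O vc) (VC_sw O hc)
  (fun v h => let: And4 a1 a2 a3 a4 := Bd _ h in And4 a3 a4 a1 a2)
  y01 x01 hX O0 O1 Oa aX Ob bX Ot1 Ot2 t12.
split.
- move=> x hx; have [z [iz ez]] := H2 x hx.
  exists (sw z); split => //; apply/intr_sw; by case: z iz {ez}.
- move=> y hy; have [z [iz ez]] := H1 y hy.
  exists (sw z); split => //; apply/intr_sw; by case: z iz {ez}.
Qed.
End Box.

Arguments xmin_uniq {R vs x x'}.
Arguments xmax_uniq {R vs x x'}.
Arguments ymin_uniq {R vs x x'}.
Arguments ymax_uniq {R vs x x'}.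
Arguments nxt_lt {R vs j}.
Arguments prv_lt {R vs j}.
Arguments vtx_inj {R vs i j}.
Arguments vtx_region {R vs i}.
Arguments vtx_bdry {R vs i}.
Arguments nxt_neq {R vs j}.
Arguments nxt2_neq {R vs j}.
Arguments ext_lt {R vs e}.
Arguments ext_pt {R a b X t}.
Arguments intrH {R O A B z u K}.
Arguments intrV {R O C D z u K}.
Arguments hpt {R O A B z}.
Arguments vpt {R O C D z}.
Arguments seg_ivt1 {R u w x}.
Arguments seg_ivt2 {R u w y}.
Arguments seg_prod1 {R a b v}.
Arguments seg_prod2 {R a b v}.
Arguments seg_sub {R a b u w}.
Arguments small4 {R a b c d}.

Section Main.
Context {R : realType}.
Local Notation pt := (R * R)%type.
Implicit Types vs : seq pt.

Lemma edge_line2 vs e (p : pt) Y : (vtx vs e).2 = Y -> (vtx vs (nxt vs e)).2 = Y ->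
  edge vs e p -> p.2 = Y.
Proof.
move=> e1 e2 h; have [-> _] := (seg_hE _ _ _ (etrans e1 (esym e2))).1 h; exact: e1.
Qed.

Lemma edge_line1 vs e (p : pt) X : (vtx vs e).1 = X -> (vtx vs (nxt vs e)).1 = X ->
  edge vs e p -> p.1 = X.
Proof.
move=> e1 e2 h; have [-> _] := (seg_vE _ _ _ (etrans e1 (esym e2))).1 h; exact: e1.
Qed.

Lemma on_bottom_eq vs y0 (p : pt) : is_ymin vs y0 -> on_bottom vs p -> p.2 = y0.
Proof. by move=> h [y hy e]; rewrite e; exact: (ymin_uniq hy h). Qed.
Lemma on_top_eq vs y1 (p : pt) : is_ymax vs y1 -> on_top vs p -> p.2 = y1.
Proof. by move=> h [y hy e]; rewrite e; exact: (ymax_uniq hy h). Qed.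
Lemma on_left_eq vs x0 (p : pt) : is_xmin vs x0 -> on_left vs p -> p.1 = x0.
Proof. by move=> h [y hy e]; rewrite e; exact: (xmin_uniq hy h). Qed.
Lemma on_right_eq vs x1 (p : pt) : is_xmax vs x1 -> on_right vs p -> p.1 = x1.
Proof. by move=> h [y hy e]; rewrite e; exact: (xmax_uniq hy h). Qed.

Lemma vtx_neq vs i : general_position vs -> (3 <= size vs)%N -> (i < size vs)%N ->
  vtx vs i <> vtx vs (nxt vs i).
Proof.
move=> gp n3 hi e; have := vtx_inj gp n3 hi (nxt_lt hi) e => h.
by have := nxt_neq (ltnW n3) hi; rewrite -h eqxx.
Qed.

Lemma diff1 (p q : pt) : p <> q -> p.2 = q.2 -> p.1 != q.1.
Proof. by move=> pq e; apply/eqP => e1; apply: pq; apply: pair_eq. Qed.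
Lemma diff2 (p q : pt) : p <> q -> p.1 = q.1 -> p.2 != q.2.
Proof. by move=> pq e; apply/eqP => e1; apply: pq; apply: pair_eq. Qed.


Lemma bounds vs x0 x1 y0 y1 : is_xmin vs x0 -> is_xmax vs x1 -> is_ymin vs y0 ->
  is_ymax vs y1 -> forall v, region vs v -> [/\ x0 <= v.1, v.1 <= x1, y0 <= v.2 & v.2 <= y1].
Proof. by move=> [a _] [b _] [c _] [d _] v h; split; [apply: a|apply: b|apply: c|apply: d]. Qed.

Arguments bounds {vs x0 x1 y0 y1}.
Arguments vtx_neq {vs i}.
Arguments diff1 {p q}.
Arguments diff2 {p q}.
Arguments on_bottom_eq {vs y0 p}.
Arguments on_top_eq {vs y1 p}.
Arguments on_left_eq {vs x0 p}.
Arguments on_right_eq {vs x1 p}.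
Arguments edge_line1 {vs e p X}.
Arguments edge_line2 {vs e p Y}.
Lemma neq_ltR (a b : R) : a != b -> a < b \/ b < a.
Proof. by move=> h; case/orP: (lt_total h) => ?; [left|right]. Qed.

Arguments neq_ltR {a b}.
Lemma setup vs sH sV : simple_polygon vs -> cross vs sH sV ->
  exists x0 x1 y0 y1, [/\ is_xmin vs x0, is_xmax vs x1, is_ymin vs y0, is_ymax vs y1 &
    x0 < x1 /\ y0 < y1].
Proof.
move=> [n3 gp _ _] [_ _ [ib [it [hb ht _]]]] [il [ir [hl hr _]]].
case: (hb) => hib [y0 hy0 _] _; case: (ht) => hit [y1 hy1 _] _.
case: (hl) => hil [x0 hx0 _] _; case: (hr) => hir [x1 hx1 _] _.
have Bd := bounds hx0 hx1 hy0 hy1.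
exists x0, x1, y0, y1; split => //; split.
- case: hb => _ b1 b2.
  have e1 := on_bottom_eq hy0 b1; have e2 := on_bottom_eq hy0 b2.
  have ne := diff1 (vtx_neq gp n3 hib) (etrans e1 (esym e2)).
  have [l1 l2 _ _] := Bd _ (vtx_region hib).
  have [m1 m2 _ _] := Bd _ (vtx_region (nxt_lt hib)).
  case: (neq_ltR ne); lra.
- case: hl => _ b1 b2.
  have e1 := on_left_eq hx0 b1; have e2 := on_left_eq hx0 b2.
  have ne := diff2 (vtx_neq gp n3 hil) (etrans e1 (esym e2)).
  have [_ _ l1 l2] := Bd _ (vtx_region hil).
  have [_ _ m1 m2] := Bd _ (vtx_region (nxt_lt hil)).
  case: (neq_ltR ne); lra.
Qed.


Arguments setup {vs sH sV}.
Lemma segU_sym (a d b : pt) : seg a d `|` seg d b = seg b d `|` seg d a.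
Proof. by rewrite setUC (seg_sym a d) (seg_sym d b). Qed.

Lemma skel vs sH sV : simple_polygon vs -> T_obstacle vs -> cross vs sH sV ->
  skeleton vs [:: sH; sV].
Proof.
move=> sp [rl rc _] cr.
have [x0 [x1 [y0 [y1 [hx0 hx1 hy0 hy1 [x01 y01]]]]]] := setup sp cr.
have Bd := bounds hx0 hx1 hy0 hy1.
case: cr => sHin sVin [ib [it [hb ht hH]]] [il [ir [hl hr hV]]].
have hc := region_HC vs rc; have vc := region_VC vs rc.
have stH : forall v, region vs v -> (v.2 - sH.1.2) * (v.2 - sH.2.2) <= 0.
  case: hb => _ b1 b2; case: ht => _ t1 t2.
  have eb1 := on_bottom_eq hy0 b1; have eb2 := on_bottom_eq hy0 b2.
  have et1 := on_top_eq hy1 t1; have et2 := on_top_eq hy1 t2.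
  move=> v /Bd [_ _ h1 h2].
  case: hH => [[e1 e2]|[e1 e2]].
  + rewrite (edge_line2 eb1 eb2 e1) (edge_line2 et1 et2 e2); nra.
  + rewrite (edge_line2 eb1 eb2 e1) (edge_line2 et1 et2 e2); nra.
have stV : forall v, region vs v -> (v.1 - sV.1.1) * (v.1 - sV.2.1) <= 0.
  case: hl => _ b1 b2; case: hr => _ t1 t2.
  have eb1 := on_left_eq hx0 b1; have eb2 := on_left_eq hx0 b2.
  have et1 := on_right_eq hx1 t1; have et2 := on_right_eq hx1 t2.
  move=> v /Bd [h1 h2 _ _].
  case: hV => [[e1 e2]|[e1 e2]].
  + rewrite (edge_line1 eb1 eb2 e1) (edge_line1 et1 et2 e2); nra.
  + rewrite (edge_line1 eb1 eb2 e1) (edge_line1 et1 et2 e2); nra.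
split.
  by move=> s; rewrite !inE => /orP [/eqP ->|/eqP ->].
move=> p q np nq hP P hLP.
have np' : ~ intr (region vs) p by move/interiorP.
have nq' : ~ intr (region vs) q by move/interiorP.
have [z [Pz /interiorP iz]] := hP _ (or_introl erefl).
have [w [Pw /interiorP iw]] := hP _ (or_intror erefl).
have fin : forall v, P v -> seg sH.1 sH.2 v \/ seg sV.1 sV.2 v ->
    exists2 s, s \in [:: sH; sV] & P `&` segset s !=set0.
  move=> v Pv [hv|hv]; [exists sH | exists sV]; rewrite ?inE ?eqxx ?orbT //; by exists v.
case: hLP => EP; subst P.
- have [v [Pv hv]] := @partA R (region vs) sH.1 sH.2 sV.1 sV.2 p q hc vc sHin sVin stH stV
    np' nq' (ex_intro _ z (conj Pz iz)) (ex_intro _ w (conj Pw iw)).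
  exact: (fin v Pv hv).
- have Pw' : (seg q (p.1, q.2) `|` seg (p.1, q.2) p) w by rewrite segU_sym.
  have Pz' : (seg q (q.1, p.2) `|` seg (q.1, p.2) p) z by rewrite segU_sym.
  have [v [Pv hv]] := @partA R (region vs) sH.1 sH.2 sV.1 sV.2 q p hc vc sHin sVin stH stV
    nq' np' (ex_intro _ w (conj Pw' iw)) (ex_intro _ z (conj Pz' iz)).
  apply: (fin v) hv; by rewrite -segU_sym.
Qed.
End Main.

Arguments xmin_uniq {R vs x x'}.
Arguments xmax_uniq {R vs x x'}.
Arguments ymin_uniq {R vs x x'}.
Arguments ymax_uniq {R vs x x'}.
Arguments nxt_lt {R vs j}.
Arguments vtx_inj {R vs i j}.
Arguments vtx_region {R vs i}.
Arguments nxt_neq {R vs j}.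
Arguments seg_prod1 {R a b v}.
Arguments seg_prod2 {R a b v}.
Arguments small4 {R a b c d}.
Arguments bounds {R vs x0 x1 y0 y1}.
Arguments vtx_neq {R vs i}.
Arguments diff1 {R p q}.
Arguments diff2 {R p q}.
Arguments on_bottom_eq {R vs y0 p}.
Arguments on_top_eq {R vs y1 p}.
Arguments on_left_eq {R vs x0 p}.
Arguments on_right_eq {R vs x1 p}.
Arguments setup {R vs sH sV}.
Arguments ext_corner_x {R vs i x0 x1}.
Arguments ext_corner_y {R vs i y0 y1}.

Arguments intr_in {R O z}.
Arguments left_bdry {R vs x0 z}.
Arguments right_bdry {R vs x1 z}.
Arguments corner_vtx {R vs X Y}.
Arguments corner_ext {R vs X Y j}.
Section PB.
Context {R : realType}.
Local Notation pt := (R * R)%type.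
Implicit Types vs : seq pt.

Lemma ends (x0 x1 A B : R) : x0 < x1 -> x0 <= A <= x1 -> x0 <= B <= x1 ->
  (forall x, x0 < x < x1 -> (x - A) * (x - B) <= 0) ->
  (A = x0 /\ B = x1) \/ (A = x1 /\ B = x0).
Proof.
move=> x01 /andP [a0 a1] /andP [b0 b1] H.
have [ab|ba] := lerP A B.
- left; split.
  + apply/eqP; rewrite eq_le a0 andbT; rewrite leNgt; apply/negP => h.
    have : x0 < (x0 + A) / 2 < x1 by apply/andP; split; lra.
    move/H; nra.
  + apply/eqP; rewrite eq_le b1 /=; rewrite leNgt; apply/negP => h.
    have : x0 < (B + x1) / 2 < x1 by apply/andP; split; lra.
    move/H; nra.
- right; split.
  + apply/eqP; rewrite eq_le a1 /=; rewrite leNgt; apply/negP => h.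
    have : x0 < (A + x1) / 2 < x1 by apply/andP; split; lra.
    move/H; nra.
  + apply/eqP; rewrite eq_le b0 andbT; rewrite leNgt; apply/negP => h.
    have : x0 < (x0 + B) / 2 < x1 by apply/andP; split; lra.
    move/H; nra.
Qed.


Lemma seg_const1 (a b u : pt) x : a.1 = x -> b.1 = x -> seg a b u -> u.1 = x.
Proof.
move=> e1 e2 /seg_prod1; rewrite e1 e2 => h.
have : (u.1 - x) ^+ 2 == 0 by rewrite eq_le sqr_ge0 andbT expr2.
by rewrite sqrf_eq0 subr_eq0 => /eqP.
Qed.

Lemma seg_const2 (a b u : pt) y : a.2 = y -> b.2 = y -> seg a b u -> u.2 = y.
Proof.
move=> e1 e2 /seg_prod2; rewrite e1 e2 => h.
have : (u.2 - y) ^+ 2 == 0 by rewrite eq_le sqr_ge0 andbT expr2.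
by rewrite sqrf_eq0 subr_eq0 => /eqP.
Qed.

Lemma vpair vs S' x0 x1 y0 y1 (z : pt) :
  (forall v, region vs v -> [/\ x0 <= v.1, v.1 <= x1, y0 <= v.2 & v.2 <= y1]) ->
  skeleton vs S' -> intr (region vs) z ->
  exists2 s, s \in S' & exists u, seg s.1 s.2 u /\ u.1 = z.1.
Proof.
move=> Bd [_ sk] iz.
set p : pt := (z.1, y0 - 1); set q : pt := (z.1, y1 + 1).
have [_ _ z1 z2] := Bd _ (intr_in iz).
have np : ~ interior (region vs) p.
  by move/interiorP/intr_in/Bd => [_ _ h _]; rewrite /= in h; lra.
have nq : ~ interior (region vs) q.
  by move/interiorP/intr_in/Bd => [_ _ _ h]; rewrite /= in h; lra.
have zin : seg (z.1, y0 - 1) (z.1, y1 + 1) z.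
  by apply/seg_vE => //; split => //=; nra.
have hP : forall P, Lpath p q P -> P `&` interior (region vs) !=set0.
  move=> P [->|->]; exists z; (split; last exact/interiorP); [right | left] => //.
have [s hs [u [Pu su]]] := sk p q np nq hP _ (or_introl erefl).
exists s => //; exists u; split => //.
by case: Pu; apply: seg_const1.
Qed.

Lemma hpair vs S' x0 x1 y0 y1 (z : pt) :
  (forall v, region vs v -> [/\ x0 <= v.1, v.1 <= x1, y0 <= v.2 & v.2 <= y1]) ->
  skeleton vs S' -> intr (region vs) z ->
  exists2 s, s \in S' & exists u, seg s.1 s.2 u /\ u.2 = z.2.
Proof.
move=> Bd [_ sk] iz.
set p : pt := (x0 - 1, z.2); set q : pt := (x1 + 1, z.2).
have [z1 z2 _ _] := Bd _ (intr_in iz).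
have np : ~ interior (region vs) p.
  by move/interiorP/intr_in/Bd => [h _ _ _]; rewrite /= in h; lra.
have nq : ~ interior (region vs) q.
  by move/interiorP/intr_in/Bd => [_ h _ _]; rewrite /= in h; lra.
have zin : seg (x0 - 1, z.2) (x1 + 1, z.2) z.
  by apply/seg_hE => //; split => //=; nra.
have hP : forall P, Lpath p q P -> P `&` interior (region vs) !=set0.
  move=> P [->|->]; exists z; (split; last exact/interiorP); [left | right] => //.
have [s hs [u [Pu su]]] := sk p q np nq hP _ (or_introl erefl).
exists s => //; exists u; split => //.
by case: Pu; apply: seg_const2.
Qed.

Lemma corner_extc vs x0 x1 y0 y1 X Y : simple_polygon vs -> rectilinear vs ->
  is_xmin vs x0 -> is_xmax vs x1 -> is_ymin vs y0 -> is_ymax vs y1 ->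
  (X = x0 \/ X = x1) -> (Y = y0 \/ Y = y1) -> region vs (X, Y) ->
  exists j, extreme_corner vs j /\ vtx vs j = (X, Y).
Proof.
move=> [n3 gp _ _] rl hx0 hx1 hy0 hy1 hX hY r.
have hX' : is_xmin vs X \/ is_xmax vs X by case: hX => ->; [left|right].
have hY' : is_ymin vs Y \/ is_ymax vs Y by case: hY => ->; [left|right].
have hb : bdry vs (X, Y).
  case: hX => eX; [exact: (left_bdry hx0 r) | exact: (right_bdry hx1 r)].
have [j hj ej] := corner_vtx rl hX' hY' hb.
exists j; split => //; exact: (corner_ext gp n3 rl hX' hY' hj ej).
Qed.

Lemma two_pts1 (O : set pt) (P Q : pt) X y0 y1 : P <> Q -> P.1 = X -> Q.1 = X ->
  (P.2 = y0 \/ P.2 = y1) -> (Q.2 = y0 \/ Q.2 = y1) -> O P -> O Q -> O (X, y0) /\ O (X, y1).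
Proof.
move=> PQ e1 e2 hP hQ OP OQ.
have eP : P = (X, P.2) by apply: pair_eq.
have eQ : Q = (X, Q.2) by apply: pair_eq.
case: hP => fP; case: hQ => fQ; rewrite fP in eP; rewrite fQ in eQ.
- by exfalso; apply: PQ; rewrite eP eQ.
- by rewrite -eP -eQ.
- by rewrite -eP -eQ.
- by exfalso; apply: PQ; rewrite eP eQ.
Qed.

Lemma two_pts2 (O : set pt) (P Q : pt) Y x0 x1 : P <> Q -> P.2 = Y -> Q.2 = Y ->
  (P.1 = x0 \/ P.1 = x1) -> (Q.1 = x0 \/ Q.1 = x1) -> O P -> O Q -> O (x0, Y) /\ O (x1, Y).
Proof.
move=> PQ e1 e2 hP hQ OP OQ.
have eP : P = (P.1, Y) by apply: pair_eq.
have eQ : Q = (Q.1, Y) by apply: pair_eq.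
case: hP => fP; case: hQ => fQ; rewrite fP in eP; rewrite fQ in eQ.
- by exfalso; apply: PQ; rewrite eP eQ.
- by rewrite -eP -eQ.
- by rewrite -eP -eQ.
- by exfalso; apply: PQ; rewrite eP eQ.
Qed.

Lemma pick_h vs e Y X : general_position vs -> (3 <= size vs)%N -> (e < size vs)%N ->
  (vtx vs e).2 = Y -> (vtx vs (nxt vs e)).2 = Y ->
  exists a, a != X /\ region vs (a, Y).
Proof.
move=> gp n3 he e1 e2.
have ne := diff1 (vtx_neq gp n3 he) (etrans e1 (esym e2)).
have r1 := vtx_region he; have r2 := vtx_region (nxt_lt he).
have E1 : vtx vs e = ((vtx vs e).1, Y) by apply: pair_eq.
have E2 : vtx vs (nxt vs e) = ((vtx vs (nxt vs e)).1, Y) by apply: pair_eq.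
have [h|h] := eqVneq (vtx vs e).1 X.
- exists (vtx vs (nxt vs e)).1; split; last by rewrite -E2.
  by rewrite -h eq_sym.
- by exists (vtx vs e).1; split; last by rewrite -E1.
Qed.

Lemma pick_v vs e X Y : general_position vs -> (3 <= size vs)%N -> (e < size vs)%N ->
  (vtx vs e).1 = X -> (vtx vs (nxt vs e)).1 = X ->
  exists a, a != Y /\ region vs (X, a).
Proof.
move=> gp n3 he e1 e2.
have ne := diff2 (vtx_neq gp n3 he) (etrans e1 (esym e2)).
have r1 := vtx_region he; have r2 := vtx_region (nxt_lt he).
have E1 : vtx vs e = (X, (vtx vs e).2) by apply: pair_eq.
have E2 : vtx vs (nxt vs e) = (X, (vtx vs (nxt vs e)).2) by apply: pair_eq.
have [h|h] := eqVneq (vtx vs e).2 Y.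
- exists (vtx vs (nxt vs e)).2; split; last by rewrite -E2.
  by rewrite -h eq_sym.
- by exists (vtx vs e).2; split; last by rewrite -E1.
Qed.

Lemma pick_h2 vs e Y : general_position vs -> (3 <= size vs)%N -> (e < size vs)%N ->
  (vtx vs e).2 = Y -> (vtx vs (nxt vs e)).2 = Y ->
  exists t1 t2, [/\ t1 != t2, region vs (t1, Y) & region vs (t2, Y)].
Proof.
move=> gp n3 he e1 e2.
have ne := diff1 (vtx_neq gp n3 he) (etrans e1 (esym e2)).
have r1 := vtx_region he; have r2 := vtx_region (nxt_lt he).
have E1 : vtx vs e = ((vtx vs e).1, Y) by apply: pair_eq.
have E2 : vtx vs (nxt vs e) = ((vtx vs (nxt vs e)).1, Y) by apply: pair_eq.
by exists (vtx vs e).1, (vtx vs (nxt vs e)).1; split; [| rewrite -E1 | rewrite -E2].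
Qed.

Lemma pick_v2 vs e X : general_position vs -> (3 <= size vs)%N -> (e < size vs)%N ->
  (vtx vs e).1 = X -> (vtx vs (nxt vs e)).1 = X ->
  exists t1 t2, [/\ t1 != t2, region vs (X, t1) & region vs (X, t2)].
Proof.
move=> gp n3 he e1 e2.
have ne := diff2 (vtx_neq gp n3 he) (etrans e1 (esym e2)).
have r1 := vtx_region he; have r2 := vtx_region (nxt_lt he).
have E1 : vtx vs e = (X, (vtx vs e).2) by apply: pair_eq.
have E2 : vtx vs (nxt vs e) = (X, (vtx vs (nxt vs e)).2) by apply: pair_eq.
by exists (vtx vs e).2, (vtx vs (nxt vs e)).2; split; [| rewrite -E1 | rewrite -E2].
Qed.
End PB.

Arguments vtx_inj {R vs i j}.
Arguments vtx_region {R vs i}.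
Arguments seg_prod1 {R a b v}.
Arguments seg_prod2 {R a b v}.
Arguments bounds {R vs x0 x1 y0 y1}.
Arguments on_bottom_eq {R vs y0 p}.
Arguments on_top_eq {R vs y1 p}.
Arguments on_left_eq {R vs x0 p}.
Arguments on_right_eq {R vs x1 p}.
Arguments setup {R vs sH sV}.
Arguments ext_corner_x {R vs i x0 x1}.
Arguments ext_corner_y {R vs i y0 y1}.
Arguments intr_in {R O z}.
Arguments vpair {R vs S' x0 x1 y0 y1 z}.
Arguments hpair {R vs S' x0 x1 y0 y1 z}.
Arguments pick_h {R vs e Y}.
Arguments pick_v {R vs e X}.
Arguments pick_h2 {R vs e Y}.
Arguments pick_v2 {R vs e X}.
Arguments two_pts1 {R O P Q X y0 y1}.
Arguments two_pts2 {R O P Q Y x0 x1}.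

Section PB2.
Context {R : realType}.
Local Notation pt := (R * R)%type.
Implicit Types vs : seq pt.

Lemma density vs sH sV : simple_polygon vs -> T_obstacle vs -> cross vs sH sV ->
  forall x0 x1 y0 y1, is_xmin vs x0 -> is_xmax vs x1 -> is_ymin vs y0 -> is_ymax vs y1 ->
  x0 < x1 -> y0 < y1 ->
  (forall x, x0 < x < x1 -> exists z, intr (region vs) z /\ z.1 = x) /\
  (forall y, y0 < y < y1 -> exists z, intr (region vs) z /\ z.2 = y).
Proof.
move=> sp [rl rc [i1 [i2 [i12 c1 c2 call side]]]] cr x0 x1 y0 y1 hx0 hx1 hy0 hy1 x01 y01.
have Bd := bounds hx0 hx1 hy0 hy1.
have hc := region_HC vs rc; have vc := region_VC vs rc.
case: (sp) => n3 gp _ _.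
case: cr => _ _ [ib [it [hb ht _]]] [il [ir [hl hr _]]].
case: hb => hib b1 b2; case: ht => hit t1 t2; case: hl => hil l1 l2; case: hr => hir r1 r2.
have eb1 := on_bottom_eq hy0 b1; have eb2 := on_bottom_eq hy0 b2.
have et1 := on_top_eq hy1 t1; have et2 := on_top_eq hy1 t2.
have el1 := on_left_eq hx0 l1; have el2 := on_left_eq hx0 l2.
have er1 := on_right_eq hx1 r1; have er2 := on_right_eq hx1 r2.
have hi1 := c1.1; have hi2 := c2.1.
have ne12 : vtx vs i1 <> vtx vs i2.
  by move=> e; move/eqP: i12; apply; exact: (vtx_inj gp n3 hi1 hi2 e).
have cx1 := ext_corner_x gp n3 hx0 hx1 c1; have cx2 := ext_corner_x gp n3 hx0 hx1 c2.
have cy1 := ext_corner_y gp n3 hy0 hy1 c1; have cy2 := ext_corner_y gp n3 hy0 hy1 c2.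
have rg1 := vtx_region hi1; have rg2 := vtx_region hi2.
case: side => [[s1 s2]|[s1 s2]|[s1 s2]|[s1 s2]].
- have [Q0 Q1] := two_pts1 ne12 (on_left_eq hx0 s1) (on_left_eq hx0 s2) cy1 cy2 rg1 rg2.
  have [a [aX Oa]] := pick_h x0 gp n3 hib eb1 eb2.
  have [b [bX Ob]] := pick_h x0 gp n3 hit et1 et2.
  have [u1 [u2 [u12 Ou1 Ou2]]] := pick_v2 gp n3 hir er1 er2.
  have E : x0 + x1 - x0 = x1 by ring.
  have Ou1' : region vs (x0 + x1 - x0, u1) by rewrite E.
  have Ou2' : region vs (x0 + x1 - x0, u2) by rewrite E.
  exact: (@boxes_v R (region vs) x0 x1 y0 y1 x0 a b u1 u2 hc vc Bd x01 y01
    (or_introl erefl) Q0 Q1 Oa aX Ob bX Ou1' Ou2' u12).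
- have [Q0 Q1] := two_pts1 ne12 (on_right_eq hx1 s1) (on_right_eq hx1 s2) cy1 cy2 rg1 rg2.
  have [a [aX Oa]] := pick_h x1 gp n3 hib eb1 eb2.
  have [b [bX Ob]] := pick_h x1 gp n3 hit et1 et2.
  have [u1 [u2 [u12 Ou1 Ou2]]] := pick_v2 gp n3 hil el1 el2.
  have E : x0 + x1 - x1 = x0 by ring.
  have Ou1' : region vs (x0 + x1 - x1, u1) by rewrite E.
  have Ou2' : region vs (x0 + x1 - x1, u2) by rewrite E.
  exact: (@boxes_v R (region vs) x0 x1 y0 y1 x1 a b u1 u2 hc vc Bd x01 y01
    (or_intror erefl) Q0 Q1 Oa aX Ob bX Ou1' Ou2' u12).
- have [Q0 Q1] := two_pts2 ne12 (on_bottom_eq hy0 s1) (on_bottom_eq hy0 s2) cx1 cx2 rg1 rg2.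
  have [a [aX Oa]] := pick_v y0 gp n3 hil el1 el2.
  have [b [bX Ob]] := pick_v y0 gp n3 hir er1 er2.
  have [u1 [u2 [u12 Ou1 Ou2]]] := pick_h2 gp n3 hit et1 et2.
  have E : y0 + y1 - y0 = y1 by ring.
  have Ou1' : region vs (u1, y0 + y1 - y0) by rewrite E.
  have Ou2' : region vs (u2, y0 + y1 - y0) by rewrite E.
  exact: (@boxes_h R (region vs) x0 x1 y0 y1 y0 a b u1 u2 hc vc Bd x01 y01
    (or_introl erefl) Q0 Q1 Oa aX Ob bX Ou1' Ou2' u12).
- have [Q0 Q1] := two_pts2 ne12 (on_top_eq hy1 s1) (on_top_eq hy1 s2) cx1 cx2 rg1 rg2.
  have [a [aX Oa]] := pick_v y1 gp n3 hil el1 el2.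
  have [b [bX Ob]] := pick_v y1 gp n3 hir er1 er2.
  have [u1 [u2 [u12 Ou1 Ou2]]] := pick_h2 gp n3 hib eb1 eb2.
  have E : y0 + y1 - y1 = y0 by ring.
  have Ou1' : region vs (u1, y0 + y1 - y1) by rewrite E.
  have Ou2' : region vs (u2, y0 + y1 - y1) by rewrite E.
  exact: (@boxes_h R (region vs) x0 x1 y0 y1 y1 a b u1 u2 hc vc Bd x01 y01
    (or_intror erefl) Q0 Q1 Oa aX Ob bX Ou1' Ou2' u12).
Qed.

End PB2.

Arguments bounds {R vs x0 x1 y0 y1}.
Arguments setup {R vs sH sV}.
Arguments vpair {R vs S' x0 x1 y0 y1 z}.
Arguments hpair {R vs S' x0 x1 y0 y1 z}.
Arguments seg_prod1 {R a b v}.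
Arguments seg_prod2 {R a b v}.
Arguments on_bottom_eq {R vs y0 p}.
Arguments on_top_eq {R vs y1 p}.
Arguments on_left_eq {R vs x0 p}.
Arguments on_right_eq {R vs x1 p}.

Arguments density {R vs sH sV}.
Arguments ends {R x0 x1 A B}.
Arguments corner_extc {R vs x0 x1 y0 y1 X Y}.
Section PB3.
Context {R : realType}.
Local Notation pt := (R * R)%type.
Implicit Types vs : seq pt.

Lemma minpart vs sH sV : simple_polygon vs -> T_obstacle vs -> cross vs sH sV ->
  forall S', skeleton vs S' -> (2 <= size S')%N.
Proof.
move=> sp T cr S' skS'.
have [x0 [x1 [y0 [y1 [hx0 hx1 hy0 hy1 [x01 y01]]]]]] := setup sp cr.
have Bd := bounds hx0 hx1 hy0 hy1.
have [DX DY] := density sp T cr _ _ _ _ hx0 hx1 hy0 hy1 x01 y01.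
case: T => rl rc [i1 [i2 [i12 c1 c2 call side]]].
case: S' skS' => [|s [|s' S'']] skS' //.
  have [z [iz ez]] : exists z, intr (region vs) z /\ z.1 = (x0 + x1) / 2.
    by apply: DX; apply/andP; split; lra.
  have [s hs _] := vpair Bd skS' iz.
  by rewrite in_nil in hs.
exfalso.
have HX : forall x, x0 < x < x1 -> (x - s.1.1) * (x - s.2.1) <= 0.
  move=> x hx; have [z [iz ez]] := DX x hx.
  have [s0 hs0 [u [su eu]]] := vpair Bd skS' iz.
  rewrite inE in hs0; move/eqP: hs0 => hs0; subst s0.
  have := seg_prod1 su; by rewrite eu ez.
have HY : forall y, y0 < y < y1 -> (y - s.1.2) * (y - s.2.2) <= 0.
  move=> y hy; have [z [iz ez]] := DY y hy.
  have [s0 hs0 [u [su eu]]] := hpair Bd skS' iz.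
  rewrite inE in hs0; move/eqP: hs0 => hs0; subst s0.
  have := seg_prod2 su; by rewrite eu ez.
have sin : segset s `<=` region vs by apply: skS'.1; rewrite mem_head.
have rs1 : region vs s.1 by apply: sin; exact: seg_l.
have rs2 : region vs s.2 by apply: sin; exact: seg_r.
have [a1 a2 a3 a4] := Bd _ rs1; have [b1 b2 b3 b4] := Bd _ rs2.
have ex := ends x01 (introT andP (conj a1 a2)) (introT andP (conj b1 b2)) HX.
have ey := ends y01 (introT andP (conj a3 a4)) (introT andP (conj b3 b4)) HY.
case: s {skS' HX HY sin} rs1 rs2 a1 a2 a3 a4 b1 b2 b3 b4 ex ey => [[p1 p2] [q1 q2]] /=
  rs1 rs2 _ _ _ _ _ _ _ _ ex ey.
have hXp : p1 = x0 \/ p1 = x1 by case: ex => [[-> _]|[-> _]]; [left|right].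
have hXq : q1 = x0 \/ q1 = x1 by case: ex => [[_ ->]|[_ ->]]; [right|left].
have hYp : p2 = y0 \/ p2 = y1 by case: ey => [[-> _]|[-> _]]; [left|right].
have hYq : q2 = y0 \/ q2 = y1 by case: ey => [[_ ->]|[_ ->]]; [right|left].
have pq1 : p1 != q1 by case: ex => [[-> ->]|[-> ->]]; apply/eqP => h; lra.
have pq2 : p2 != q2 by case: ey => [[-> ->]|[-> ->]]; apply/eqP => h; lra.
have [j1 [cj1 ej1]] := corner_extc sp rl hx0 hx1 hy0 hy1 hXp hYp rs1.
have [j2 [cj2 ej2]] := corner_extc sp rl hx0 hx1 hy0 hy1 hXq hYq rs2.
have key : (vtx vs i1).1 = (vtx vs i2).1 \/ (vtx vs i1).2 = (vtx vs i2).2.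
  case: side => [[s1 s2]|[s1 s2]|[s1 s2]|[s1 s2]].
  - by left; rewrite (on_left_eq hx0 s1) (on_left_eq hx0 s2).
  - by left; rewrite (on_right_eq hx1 s1) (on_right_eq hx1 s2).
  - by right; rewrite (on_bottom_eq hy0 s1) (on_bottom_eq hy0 s2).
  - by right; rewrite (on_top_eq hy1 s1) (on_top_eq hy1 s2).
have fin : (vtx vs j1).1 = (vtx vs j2).1 \/ (vtx vs j1).2 = (vtx vs j2).2.
  case: (call j1 cj1) => ->; case: (call j2 cj2) => ->.
  - by left.
  - exact: key.
  - by case: key => e; [left|right].
  - by left.
rewrite ej1 ej2 /= in fin.
by case: fin => e; [move: pq1 | move: pq2]; rewrite e eqxx.
Qed.

End PB3.

Theorem lemma8 (R : realType) (vs : seq (R * R)) (sH sV : (R * R) * (R * R)) :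
  simple_polygon vs -> T_obstacle vs -> cross vs sH sV ->
  min_skeleton vs [:: sH; sV].
Proof.
move=> sp T cr; split; first exact: (@skel R vs sH sV sp T cr).
exact: (@minpart R vs sH sV sp T cr).
Qed.
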